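(* Let $\alpha:\mathbb{M}^2\to\mathbb{R}^3$ be an immersion of class $C^r$, $r\ge6$, and let $0$ be a parabolic point of $\alpha$, parametrized in a Monge chart by $\alpha(x,y)=(x,y,h(x,y))$ with $$h(x,y)=\frac{k}{2}y^2+\frac{a}{6}x^3+\frac{b}{2}xy^2+\frac{d}{2}x^2y+\frac{c}{6}y^3+\frac{A}{24}x^4+\frac{B}{6}x^3y+\frac{C}{4}x^2y^2+\frac{D}{6}xy^3+\frac{E}{24}y^4+O(5).$$ Assume $k>0$ and $a^2+d^2\neq0$. Then the set of parabolic points ($\mathcal{K}=0$) is, near $0$, a regular curve normal to the vector $(a,d)$ at $0$. If $a\ne0$, the parabolic curve is transversal at $0$ to the minimal principal direction $(1,0)$. If $a=0$, the parabolic curve is tangent at $0$ to the principal direction $(1,0)$, and it has quadratic contact with the minimal principal curvature line through $0$ tangent to $(1,0)$ provided $dk(Ak-3d^2)\neq 0$.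
   Context: $\mathcal{K}$ denotes the Gaussian curvature of $\alpha$; a parabolic point is a point where $\mathcal{K}=0$. At $0$ the principal directions are $(1,0)$ (principal curvature $0$, the minimal one) and $(0,1)$ (principal curvature $k$); principal curvature lines are curves tangent to principal directions. *)

(* Defs.v *)
From Stdlib Require Import Reals Lra List.
From Coquelicot Require Import Coquelicot.
Open Scope R_scope.

(** Surfaces are studied in a Monge chart alpha(x,y) = (x, y, h x y),
    h : R -> R -> R. *)

Inductive dvar := dX | dY.

Definition pd (v : dvar) (f : R -> R -> R) : R -> R -> R :=
  match v with
  | dX => fun x y => Derive (fun t => f t y) x
  | dY => fun x y => Derive (fun t => f x t) y
  end.

Fixpoint pds (w : list dvar) (f : R -> R -> R) : R -> R -> R :=
  match w with
  | nil => f
  | v :: w' => pd v (pds w' f)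
  end.

Definition ex_pd (v : dvar) (f : R -> R -> R) (x y : R) : Prop :=
  match v with
  | dX => ex_derive (fun t => f t y) x
  | dY => ex_derive (fun t => f x t) y
  end.

Definition Cr_on (r : nat) (U : R -> R -> Prop) (f : R -> R -> R) : Prop :=
  forall w : list dvar, (length w <= r)%nat ->
  forall x y, U x y ->
    continuous (fun p : R * R => pds w f (fst p) (snd p)) (x, y) /\
    ((length w < r)%nat -> forall v, ex_pd v (pds w f) x y).

Definition disk (rho : R) : R -> R -> Prop := fun x y => x ^ 2 + y ^ 2 < rho ^ 2.

Definition hx  h := pds (dX :: nil) h.
Definition hy  h := pds (dY :: nil) h.
Definition hxx h := pds (dX :: dX :: nil) h.
Definition hxy h := pds (dX :: dY :: nil) h.
Definition hyy h := pds (dY :: dY :: nil) h.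

Definition fE h x y := 1 + hx h x y ^ 2.
Definition fF h x y := hx h x y * hy h x y.
Definition fG h x y := 1 + hy h x y ^ 2.
Definition Wn h x y := sqrt (1 + hx h x y ^ 2 + hy h x y ^ 2).
(** second fundamental form, unit normal (-h_x,-h_y,1)/W *)
Definition se h x y := hxx h x y / Wn h x y.
Definition sf h x y := hxy h x y / Wn h x y.
Definition sg h x y := hyy h x y / Wn h x y.

Definition gaussK h x y :=
  (se h x y * sg h x y - sf h x y ^ 2) / (fE h x y * fG h x y - fF h x y ^ 2).
Definition meanH h x y :=
  (se h x y * fG h x y - 2 * sf h x y * fF h x y + sg h x y * fE h x y)
  / (2 * (fE h x y * fG h x y - fF h x y ^ 2)).

Definition kmin h x y := meanH h x y - sqrt (meanH h x y ^ 2 - gaussK h x y).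

Definition principal_dir h (kap x y v1 v2 : R) : Prop :=
  (v1 <> 0 \/ v2 <> 0) /\
  (se h x y - kap * fE h x y) * v1 + (sf h x y - kap * fF h x y) * v2 = 0 /\
  (sf h x y - kap * fF h x y) * v1 + (sg h x y - kap * fG h x y) * v2 = 0.

Definition crvx (c : R -> R * R) : R -> R := fun t => fst (c t).
Definition crvy (c : R -> R * R) : R -> R := fun t => snd (c t).

Definition C2_on (eps : R) (f : R -> R) : Prop :=
  forall t, Rabs t < eps ->
    ex_derive f t /\ ex_derive (Derive f) t /\
    continuous (Derive f) t /\ continuous (Derive_n f 2) t.

Definition regular_C2_curve (eps : R) (c : R -> R * R) : Prop :=
  C2_on eps (crvx c) /\ C2_on eps (crvy c) /\
  forall t, Rabs t < eps -> (Derive (crvx c) t <> 0 \/ Derive (crvy c) t <> 0).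

Definition min_curvature_line h (eta : R) (beta : R -> R * R) : Prop :=
  regular_C2_curve eta beta /\
  forall t, Rabs t < eta ->
    principal_dir h (kmin h (crvx beta t) (crvy beta t)) (crvx beta t) (crvy beta t)
      (Derive (crvx beta) t) (Derive (crvy beta) t).

(** curvature of the graph y = q(x) at 0 for a curve c tangent to the x-axis
    at t = 0: d^2 y / dx^2 = y''(0) / x'(0)^2 (invariant under
    reparametrization). *)
Definition graph_second_deriv (c : R -> R * R) : R :=
  Derive_n (crvy c) 2 0 / (Derive (crvx c) 0) ^ 2.

Definition mongeP (k a b c d A B C D E x y : R) : R :=
  k / 2 * y ^ 2 + a / 6 * x ^ 3 + b / 2 * x * y ^ 2 + d / 2 * x ^ 2 * y
  + c / 6 * y ^ 3 + A / 24 * x ^ 4 + B / 6 * x ^ 3 * y + C / 4 * x ^ 2 * y ^ 2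
  + D / 6 * x * y ^ 3 + E / 24 * y ^ 4.

(* Main.v *)
Require Import Defs.
From Stdlib Require Import Reals Lra List Lia ClassicalEpsilon.
From Coquelicot Require Import Coquelicot.
Open Scope R_scope.

Lemma pds_app w1 w2 f : pds (w1 ++ w2) f = pds w1 (pds w2 f).
Proof. induction w1 as [|v w IH]; simpl; [reflexivity| rewrite IH; reflexivity]. Qed.

Lemma cont_2d_of (g : R -> R -> R) x y :
  continuous (fun p : R * R => g (fst p) (snd p)) (x, y) -> continuity_2d_pt g x y.
Proof. intro H. apply continuity_2d_pt_filterlim. exact H. Qed.

Lemma Cr_pds n U f w : (length w <= n)%nat -> Cr_on n U f -> Cr_on (n - length w) U (pds w f).
Proof.
  intros Hw H w' Hl x y Hxy. rewrite <- pds_app.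
  destruct (H (w' ++ w)) with x y as [H1 H2]; [rewrite length_app; lia| exact Hxy|].
  split; [exact H1|]. intros Hlt v. apply H2. rewrite length_app; lia.
Qed.

Lemma Cr_le n m U f : (m <= n)%nat -> Cr_on n U f -> Cr_on m U f.
Proof.
  intros Hmn H w Hl x y Hxy. destruct (H w) with x y as [H1 H2]; [lia|exact Hxy|].
  split; [exact H1|]. intros Hlt v. apply H2. lia.
Qed.

Lemma Cr_exdiff n : forall U f x y, Cr_on n U f -> U x y -> ex_diff_n f n x y.
Proof.
  induction n as [|n IH]; intros U f x y H Hxy.
  - simpl. split; [|exact I]. apply cont_2d_of. apply (H nil); simpl; [lia|exact Hxy].
  - simpl. destruct (H nil) with x y as [H1 H2]; [simpl; lia|exact Hxy|].
    split; [apply cont_2d_of; exact H1|].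
    split; [exact (H2 ltac:(simpl; lia) dX)|].
    split; [exact (H2 ltac:(simpl; lia) dY)|].
    split.
    + apply (IH U (pd dX f)); [|exact Hxy].
      pose proof (Cr_pds (S n) U f (dX :: nil) ltac:(simpl; lia) H) as H'. simpl in H'.
      replace (n - 0)%nat with n in H' by lia. exact H'.
    + apply (IH U (pd dY f)); [|exact Hxy].
      pose proof (Cr_pds (S n) U f (dY :: nil) ltac:(simpl; lia) H) as H'. simpl in H'.
      replace (n - 0)%nat with n in H' by lia. exact H'.
Qed.

Definition Dn (n : nat) (del : R) (f : R -> R -> R) : Prop :=
  forall u v, Rabs u < del -> Rabs v < del -> ex_diff_n f n u v.

Lemma box_open del u v : Rabs u < del -> Rabs v < del ->
  locally_2d (fun u' v' => Rabs u' < del /\ Rabs v' < del) u v.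
Proof.
  intros Hu Hv.
  assert (He : 0 < Rmin (del - Rabs u) (del - Rabs v)) by (apply Rmin_glb_lt; lra).
  exists (mkposreal _ He). intros u' v' H1 H2. simpl in H1, H2.
  pose proof (Rmin_l (del - Rabs u) (del - Rabs v)).
  pose proof (Rmin_r (del - Rabs u) (del - Rabs v)).
  pose proof (Rabs_triang_inv u' u). pose proof (Rabs_triang_inv v' v).
  split; lra.
Qed.

Lemma Dn_loc n del f u v : Dn n del f -> Rabs u < del -> Rabs v < del ->
  locally_2d (ex_diff_n f n) u v.
Proof.
  intros H Hu Hv. eapply locally_2d_impl; [|exact (box_open del u v Hu Hv)].
  apply locally_2d_forall. intros u' v' [H1 H2]. apply H; assumption.
Qed.

Lemma locally_2d_2 P x y : locally_2d P x y -> locally_2d (locally_2d P) x y.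
Proof.
  intros [e He].
  assert (He2 : 0 < e / 2) by (destruct e; simpl; lra).
  exists (mkposreal _ He2). intros u v Hu Hv. simpl in Hu, Hv.
  exists (mkposreal _ He2). intros u' v' Hu' Hv'. simpl in Hu', Hv'.
  apply He.
  - replace (u' - x) with ((u' - u) + (u - x)) by ring.
    eapply Rle_lt_trans; [apply Rabs_triang|]. lra.
  - replace (v' - y) with ((v' - v) + (v - y)) by ring.
    eapply Rle_lt_trans; [apply Rabs_triang|]. lra.
Qed.

Lemma loc_lift2 (P1 P2 Q : R -> R -> Prop) x y :
  (forall u v, locally_2d P1 u v -> locally_2d P2 u v -> Q u v) ->
  locally_2d P1 x y -> locally_2d P2 x y -> locally_2d Q x y.
Proof.
  intros H H1 H2. apply locally_2d_2 in H1. apply locally_2d_2 in H2.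
  eapply locally_2d_impl; [|exact (locally_2d_and _ _ _ _ H1 H2)].
  apply locally_2d_forall. intros u v [A1 A2]. apply H; assumption.
Qed.

Lemma exd_proj_x n f x y : ex_diff_n f (S n) x y -> ex_diff_n (pd dX f) n x y.
Proof. simpl. tauto. Qed.
Lemma exd_proj_y n f x y : ex_diff_n f (S n) x y -> ex_diff_n (pd dY f) n x y.
Proof. simpl. tauto. Qed.
Lemma exd_cont n f x y : ex_diff_n f n x y -> continuity_2d_pt f x y.
Proof. destruct n; simpl; tauto. Qed.
Lemma exd_dx n f x y : ex_diff_n f (S n) x y -> ex_derive (fun z => f z y) x.
Proof. simpl. tauto. Qed.
Lemma exd_dy n f x y : ex_diff_n f (S n) x y -> ex_derive (fun z => f x z) y.
Proof. simpl. tauto. Qed.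

Lemma exR_plus (f g : R -> R) x : ex_derive f x -> ex_derive g x -> ex_derive (fun z => f z + g z) x.
Proof. intros. apply (ex_derive_plus f g); assumption. Qed.
Lemma exR_mult (f g : R -> R) x : ex_derive f x -> ex_derive g x -> ex_derive (fun z => f z * g z) x.
Proof. intros. apply (ex_derive_mult f g); assumption. Qed.
Lemma DR_plus (f g : R -> R) x : ex_derive f x -> ex_derive g x -> Derive (fun z => f z + g z) x = Derive f x + Derive g x.
Proof. intros. apply (Derive_plus f g); assumption. Qed.
Lemma DR_mult (f g : R -> R) x : ex_derive f x -> ex_derive g x -> Derive (fun z => f z * g z) x = Derive f x * g x + f x * Derive g x.
Proof. intros. apply (Derive_mult f g); assumption. Qed.

Lemma exd_plus n : forall f g x y, locally_2d (ex_diff_n f n) x y ->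
  locally_2d (ex_diff_n g n) x y -> ex_diff_n (fun u v => f u v + g u v) n x y.
Proof.
  induction n as [|n IH]; intros f g x y Hf Hg.
  - simpl. split; [|exact I]. apply continuity_2d_pt_plus.
    + exact (exd_cont _ _ _ _ (locally_2d_singleton _ _ _ Hf)).
    + exact (exd_cont _ _ _ _ (locally_2d_singleton _ _ _ Hg)).
  - pose proof (locally_2d_singleton _ _ _ Hf) as Hf0.
    pose proof (locally_2d_singleton _ _ _ Hg) as Hg0.
    simpl. split; [apply continuity_2d_pt_plus; eapply exd_cont; eassumption|].
    split; [apply exR_plus; eapply exd_dx; eassumption|].
    split; [apply exR_plus; eapply exd_dy; eassumption|].
    split.
    + apply ex_diff_n_ext_loc with (fun u v => pd dX f u v + pd dX g u v).
      * eapply locally_2d_impl; [|exact (locally_2d_and _ _ _ _ Hf Hg)].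
        apply locally_2d_forall. intros u v [A1 A2]. simpl. symmetry.
        apply DR_plus; eapply exd_dx; eassumption.
      * apply IH.
        -- eapply locally_2d_impl; [|exact Hf]. apply locally_2d_forall. intros u v. apply exd_proj_x.
        -- eapply locally_2d_impl; [|exact Hg]. apply locally_2d_forall. intros u v. apply exd_proj_x.
    + apply ex_diff_n_ext_loc with (fun u v => pd dY f u v + pd dY g u v).
      * eapply locally_2d_impl; [|exact (locally_2d_and _ _ _ _ Hf Hg)].
        apply locally_2d_forall. intros u v [A1 A2]. simpl. symmetry.
        apply DR_plus; eapply exd_dy; eassumption.
      * apply IH.
        -- eapply locally_2d_impl; [|exact Hf]. apply locally_2d_forall. intros u v. apply exd_proj_y.
        -- eapply locally_2d_impl; [|exact Hg]. apply locally_2d_forall. intros u v. apply exd_proj_y.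
Qed.

Lemma loc_proj_x n f x y : locally_2d (ex_diff_n f (S n)) x y -> locally_2d (ex_diff_n (pd dX f) n) x y.
Proof. intro H. eapply locally_2d_impl; [|exact H]. apply locally_2d_forall. intros u v. apply exd_proj_x. Qed.
Lemma loc_proj_y n f x y : locally_2d (ex_diff_n f (S n)) x y -> locally_2d (ex_diff_n (pd dY f) n) x y.
Proof. intro H. eapply locally_2d_impl; [|exact H]. apply locally_2d_forall. intros u v. apply exd_proj_y. Qed.
Lemma loc_m n f x y : locally_2d (ex_diff_n f (S n)) x y -> locally_2d (ex_diff_n f n) x y.
Proof. intro H. eapply locally_2d_impl; [|exact H]. apply locally_2d_forall. intros u v. apply ex_diff_n_m. lia. Qed.

Lemma exd_mult n : forall f g x y, locally_2d (ex_diff_n f n) x y ->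
  locally_2d (ex_diff_n g n) x y -> ex_diff_n (fun u v => f u v * g u v) n x y.
Proof.
  induction n as [|n IH]; intros f g x y Hf Hg.
  - simpl. split; [|exact I]. apply continuity_2d_pt_mult.
    + exact (exd_cont _ _ _ _ (locally_2d_singleton _ _ _ Hf)).
    + exact (exd_cont _ _ _ _ (locally_2d_singleton _ _ _ Hg)).
  - pose proof (locally_2d_singleton _ _ _ Hf) as Hf0.
    pose proof (locally_2d_singleton _ _ _ Hg) as Hg0.
    simpl. split; [apply continuity_2d_pt_mult; eapply exd_cont; eassumption|].
    split; [apply exR_mult; eapply exd_dx; eassumption|].
    split; [apply exR_mult; eapply exd_dy; eassumption|].
    split.
    + apply ex_diff_n_ext_loc with (fun u v => pd dX f u v * g u v + f u v * pd dX g u v).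
      * eapply locally_2d_impl; [|exact (locally_2d_and _ _ _ _ Hf Hg)].
        apply locally_2d_forall. intros u v [A1 A2]. simpl.
        rewrite (DR_mult (fun t => f t v) (fun t => g t v) u); [reflexivity| |]; eapply exd_dx; eassumption.
      * apply exd_plus.
        -- apply (loc_lift2 (ex_diff_n (pd dX f) n) (ex_diff_n g n)).
           ++ intros u v. apply IH.
           ++ apply loc_proj_x; exact Hf.
           ++ apply loc_m; exact Hg.
        -- apply (loc_lift2 (ex_diff_n f n) (ex_diff_n (pd dX g) n)).
           ++ intros u v. apply IH.
           ++ apply loc_m; exact Hf.
           ++ apply loc_proj_x; exact Hg.
    + apply ex_diff_n_ext_loc with (fun u v => pd dY f u v * g u v + f u v * pd dY g u v).
      * eapply locally_2d_impl; [|exact (locally_2d_and _ _ _ _ Hf Hg)].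
        apply locally_2d_forall. intros u v [A1 A2]. simpl.
        rewrite (DR_mult (fun t => f u t) (fun t => g u t) v); [reflexivity| |]; eapply exd_dy; eassumption.
      * apply exd_plus.
        -- apply (loc_lift2 (ex_diff_n (pd dY f) n) (ex_diff_n g n)).
           ++ intros u v. apply IH.
           ++ apply loc_proj_y; exact Hf.
           ++ apply loc_m; exact Hg.
        -- apply (loc_lift2 (ex_diff_n f n) (ex_diff_n (pd dY g) n)).
           ++ intros u v. apply IH.
           ++ apply loc_m; exact Hf.
           ++ apply loc_proj_y; exact Hg.
Qed.

Lemma exd_const n : forall (c : R) x y, ex_diff_n (fun _ _ => c) n x y.
Proof.
  induction n as [|n IH]; intros c x y.
  - simpl. split; [apply continuity_2d_pt_const| exact I].
  - simpl. split; [apply continuity_2d_pt_const|].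
    split; [apply ex_derive_const|]. split; [apply ex_derive_const|].
    split.
    + apply ex_diff_n_ext_loc with (fun _ _ => 0); [|apply IH].
      apply locally_2d_forall. intros u v. rewrite Derive_const. reflexivity.
    + apply ex_diff_n_ext_loc with (fun _ _ => 0); [|apply IH].
      apply locally_2d_forall. intros u v. rewrite Derive_const. reflexivity.
Qed.

Lemma exd_swap n : forall f x y, ex_diff_n f n x y -> ex_diff_n (fun u v => f v u) n y x.
Proof.
  induction n as [|n IH]; intros f x y H.
  - simpl in *. split; [|exact I]. destruct H as [H _].
    intros eps. destruct (H eps) as [e He]. exists e. intros u v Hu Hv. apply He; assumption.
  - simpl in *. destruct H as [H0 [H1 [H2 [H3 H4]]]].
    split; [intros eps; destruct (H0 eps) as [e He]; exists e; intros u v Hu Hv; apply He; assumption|].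
    split; [exact H2|]. split; [exact H1|]. split.
    + exact (IH _ _ _ H4).
    + exact (IH _ _ _ H3).
Qed.

Lemma Dn_plus n del f g : Dn n del f -> Dn n del g -> Dn n del (fun u v => f u v + g u v).
Proof. intros Hf Hg u v Hu Hv. apply exd_plus; eapply Dn_loc; eassumption. Qed.
Lemma Dn_mult n del f g : Dn n del f -> Dn n del g -> Dn n del (fun u v => f u v * g u v).
Proof. intros Hf Hg u v Hu Hv. apply exd_mult; eapply Dn_loc; eassumption. Qed.
Lemma Dn_const n del c : Dn n del (fun _ _ => c).
Proof. intros u v _ _. apply exd_const. Qed.
Lemma Dn_ext n del f g : (forall u v, f u v = g u v) -> Dn n del f -> Dn n del g.
Proof. intros E H u v Hu Hv. apply ex_diff_n_ext_loc with f; [apply locally_2d_forall; exact E| apply H; assumption]. Qed.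
Lemma Dn_minus n del f g : Dn n del f -> Dn n del g -> Dn n del (fun u v => f u v - g u v).
Proof.
  intros Hf Hg. apply Dn_ext with (fun u v => f u v + (fun _ _ => -1) u v * g u v).
  - intros; ring.
  - apply Dn_plus; [exact Hf|]. apply Dn_mult; [apply Dn_const|exact Hg].
Qed.
Lemma Dn_opp n del f : Dn n del f -> Dn n del (fun u v => - f u v).
Proof.
  intros Hf. apply Dn_ext with (fun u v => (fun _ _ => -1) u v * f u v).
  - intros; ring.
  - apply Dn_mult; [apply Dn_const|exact Hf].
Qed.
Lemma Dn_swap n del f : Dn n del f -> Dn n del (fun u v => f v u).
Proof. intros H u v Hu Hv. apply (exd_swap n f v u). apply H; assumption. Qed.
Lemma Dn_le n m del f : (m <= n)%nat -> Dn n del f -> Dn m del f.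
Proof. intros Hl H u v Hu Hv. apply ex_diff_n_m with n; [exact Hl| apply H; assumption]. Qed.
Lemma Dn_pdx n del f : Dn (S n) del f -> Dn n del (pd dX f).
Proof. intros H u v Hu Hv. apply exd_proj_x. apply H; assumption. Qed.
Lemma Dn_pdy n del f : Dn (S n) del f -> Dn n del (pd dY f).
Proof. intros H u v Hu Hv. apply exd_proj_y. apply H; assumption. Qed.

Lemma DL1_eq f x y dx dy : DL_pol 1 f x y dx dy =
  f x y + (pd dX f x y * dx + pd dY f x y * dy).
Proof. intros. unfold DL_pol, differential, partial_derive. simpl. unfold Binomial.C. simpl.
set (A := Derive _ y). set (B := Derive _ x). unfold pd. simpl. fold A B. field. Qed.

Lemma diff_of_exd2 f x y : locally_2d (ex_diff_n f 2) x y ->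
  differentiable_pt_lim f x y (pd dX f x y) (pd dY f x y).
Proof.
  intro H. destruct (Taylor_Lagrange_2d f 1 x y H) as [D HD].
  intros eps. destruct HD as [e He].
  assert (Hp : 0 < Rmin e (eps / (Rabs D + 1))).
  { apply Rmin_glb_lt; [apply cond_pos|]. apply Rdiv_lt_0_compat; [apply cond_pos| pose proof (Rabs_pos D); lra]. }
  exists (mkposreal _ Hp). intros u v Hu Hv. simpl in Hu, Hv.
  pose proof (Rmin_l e (eps / (Rabs D + 1))) as Hm1.
  pose proof (Rmin_r e (eps / (Rabs D + 1))) as Hm2.
  specialize (He u v ltac:(lra) ltac:(lra)). rewrite DL1_eq in He.
  set (M := Rmax (Rabs (u - x)) (Rabs (v - y))) in *.
  assert (HM0 : 0 <= M) by (unfold M; eapply Rle_trans; [apply Rabs_pos| apply Rmax_l]).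
  assert (HMe : M * (Rabs D + 1) <= eps).
  { assert (M < eps / (Rabs D + 1)).
    { unfold M. apply Rmax_lub_lt; lra. }
    pose proof (Rabs_pos D). apply Rlt_le.
    apply (Rmult_lt_compat_r (Rabs D + 1)) in H0; [|lra].
    unfold Rdiv in H0. rewrite Rmult_assoc, Rinv_l in H0; lra. }
  replace (f u v - f x y - (pd dX f x y * (u - x) + pd dY f x y * (v - y)))
    with (f u v - (f x y + (pd dX f x y * (u - x) + pd dY f x y * (v - y)))) by ring.
  eapply Rle_trans; [exact He|].
  pose proof (Rle_abs D). pose proof (Rabs_pos D).
  assert (T1 : 0 <= (Rabs D - D) * (M * M)) by (apply Rmult_le_pos; nra).
  assert (T2 : 0 <= (eps - M * (Rabs D + 1)) * M) by (apply Rmult_le_pos; lra).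
  replace (M ^ 2) with (M * M) by ring. nra.
Qed.

Lemma cont_comp_curve (f : R -> R -> R) (p q : R -> R) s :
  continuity_2d_pt f (p s) (q s) -> continuity_pt p s -> continuity_pt q s ->
  continuity_pt (fun t => f (p t) (q t)) s.
Proof.
  intros Hf Hp Hq. intros eps Heps.
  destruct (Hf (mkposreal _ Heps)) as [e He].
  destruct (Hp e (cond_pos e)) as [a1 [Ha1 H1]].
  destruct (Hq e (cond_pos e)) as [a2 [Ha2 H2]].
  exists (Rmin a1 a2). split; [apply Rmin_glb_lt; assumption|].
  intros t [_ Ht]. simpl in *. unfold R_dist in *.
  destruct (Req_dec t s) as [->|Hne]. { unfold Rminus. rewrite Rplus_opp_r, Rabs_R0. exact Heps. }
  apply He.
  - destruct (Req_dec (p t) (p s)) as [E|NE]; [rewrite E; unfold Rminus; rewrite Rplus_opp_r, Rabs_R0; apply cond_pos|].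
    apply H1. split; [split; [exact I| auto]|]. eapply Rlt_le_trans; [exact Ht| apply Rmin_l].
  - destruct (Req_dec (q t) (q s)) as [E|NE]; [rewrite E; unfold Rminus; rewrite Rplus_opp_r, Rabs_R0; apply cond_pos|].
    apply H2. split; [split; [exact I| auto]|]. eapply Rlt_le_trans; [exact Ht| apply Rmin_r].
Qed.

Lemma cont_of_ex_derive (f : R -> R) x : ex_derive f x -> continuity_pt f x.
Proof. intro H. apply continuity_pt_filterlim. apply (ex_derive_continuous f x H). Qed.

Lemma cont2d_bound f x y : continuity_2d_pt f x y ->
  exists e K, 0 < e /\ forall u v, Rabs (u - x) < e -> Rabs (v - y) < e -> Rabs (f u v) <= K.
Proof.
  intro H. destruct (H (mkposreal 1 Rlt_0_1)) as [e He].
  exists e, (Rabs (f x y) + 1). split; [apply cond_pos|].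
  intros u v Hu Hv. specialize (He u v Hu Hv). simpl in He.
  pose proof (Rabs_triang_inv (f u v) (f x y)). lra.
Qed.

Lemma loc_of (x e : R) (P : R -> Prop) : 0 < e -> (forall t, Rabs (t - x) < e -> P t) -> locally x P.
Proof. intros He H. exists (mkposreal e He). intros t Ht. apply H. exact Ht. Qed.

Lemma loc_int (s e : R) : Rabs s < e -> locally s (fun t => Rabs t < e).
Proof.
  intro H. apply loc_of with (e - Rabs s); [lra|]. intros t Ht.
  pose proof (Rabs_triang_inv t s). lra.
Qed.

Lemma between_abs a b c r : Rmin a b <= c <= Rmax a b -> Rabs a < r -> Rabs b < r -> Rabs c < r.
Proof.
  intros [H1 H2] Ha Hb. unfold Rmin, Rmax in *.
  destruct (Rle_dec a b); apply Rabs_def1;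
  apply Rabs_def2 in Ha; apply Rabs_def2 in Hb; lra.
Qed.

Lemma between_dist a b c : Rmin a b <= c <= Rmax a b -> Rabs (c - a) <= Rabs (b - a).
Proof.
  intros [H1 H2]. unfold Rmin, Rmax in *.
  destruct (Rle_dec a b).
  - rewrite !Rabs_right; lra.
  - rewrite !Rabs_left1; lra.
Qed.

Lemma isd_opp (f : R -> R) x l : is_derive f x l -> is_derive (fun t => - f t) x (- l).
Proof. intro H. exact (is_derive_opp f x l H). Qed.

Lemma exd_at n del f u v : Dn n del f -> Rabs u < del -> Rabs v < del -> ex_diff_n f n u v.
Proof. intros H Hu Hv. apply H; assumption. Qed.

Lemma mono_G (G : R -> R -> R) del e : e <= del -> Dn 1 del G ->
  (forall u v, Rabs u < e -> Rabs v < e -> 0 < pd dY G u v) ->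
  forall s t1 t2, Rabs s < e -> Rabs t1 < e -> Rabs t2 < e -> t1 < t2 -> G s t1 < G s t2.
Proof.
  intros Hed HG Hpos s t1 t2 Hs H1 H2 Hlt.
  destruct (MVT_gen (fun t => G s t) t1 t2 (fun t => pd dY G s t)) as [c [Hc Heq]].
  - intros x Hx. rewrite Rmin_left, Rmax_right in Hx by lra.
    apply (Derive_correct (fun t => G s t)). apply (exd_dy 0).
    apply HG; [lra|]. apply Rabs_def1; apply Rabs_def2 in H1; apply Rabs_def2 in H2; lra.
  - intros x Hx. rewrite Rmin_left, Rmax_right in Hx by lra.
    apply cont_of_ex_derive. apply (exd_dy 0).
    apply HG; [lra|]. apply Rabs_def1; apply Rabs_def2 in H1; apply Rabs_def2 in H2; lra.
  - assert (Hcs : Rabs c < e) by (eapply between_abs; eassumption).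
    specialize (Hpos s c Hs Hcs). nra.
Qed.

Ltac absr := repeat match goal with
  | H : Rabs _ < _ |- _ => apply Rabs_def2 in H; destruct H
  | H : Rabs _ <= _ |- _ => apply Rabs_le_between in H; destruct H
  end.

Lemma ift_base (G : R -> R -> R) del : 0 < del -> Dn 3 del G -> G 0 0 = 0 -> 0 < pd dY G 0 0 ->
  exists e e1 b (phi : R -> R), 0 < e1 /\ e1 <= e /\ e <= del /\ b = e / 2 /\ 0 < e /\
   (forall u v, Rabs u < e -> Rabs v < e -> 0 < pd dY G u v) /\
   (forall s, Rabs s < e1 -> Rabs (phi s) < b /\ G s (phi s) = 0) /\
   (forall s t, Rabs s < e1 -> Rabs t < b -> G s t = 0 -> t = phi s) /\
   (forall s0, Rabs s0 < e1 -> forall eps, 0 < eps -> exists eta, 0 < eta /\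
       forall s, Rabs (s - s0) < eta -> Rabs s < e1 -> Rabs (phi s - phi s0) < eps).
Proof.
  intros Hdel HG H0 Hy.
  assert (HD1 : Dn 1 del G) by (apply Dn_le with 3%nat; [lia|exact HG]).
  assert (Hc : continuity_2d_pt (pd dY G) 0 0).
  { apply (exd_cont 2%nat). apply exd_proj_y. apply HG; rewrite Rabs_R0; lra. }
  assert (Hy2 : 0 < pd dY G 0 0 / 2) by lra.
  destruct (Hc (mkposreal _ Hy2)) as [e0 He0]. cbn [pos] in He0.
  set (e := Rmin e0 del).
  assert (He : 0 < e) by (apply Rmin_glb_lt; [apply cond_pos|exact Hdel]).
  assert (Hed : e <= del) by apply Rmin_r.
  assert (Hpos : forall u v, Rabs u < e -> Rabs v < e -> 0 < pd dY G u v).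
  { intros u v Hu Hv. assert (Rabs (u - 0) < e0 /\ Rabs (v - 0) < e0) as [A1 A2].
    { rewrite !Rminus_0_r. assert (Hee0 : e <= e0) by apply Rmin_l. split; lra. }
    specialize (He0 u v A1 A2). absr. lra. }
  pose proof (mono_G G del e Hed HD1 Hpos) as Hmono.
  set (b := e / 2). assert (Hbdef : b = e / 2) by reflexivity.
  assert (Hb : 0 < b) by (unfold b; lra).
  assert (Hbe : b < e) by (unfold b; lra).
  assert (Gb : 0 < G 0 b).
  { assert (G 0 0 < G 0 b) by (apply Hmono; rewrite ?Rabs_R0; try rewrite Rabs_right; lra). lra. }
  assert (Gmb : G 0 (- b) < 0).
  { assert (G 0 (- b) < G 0 0) by (apply Hmono; rewrite ?Rabs_R0, ?Rabs_Ropp; try rewrite Rabs_right; lra). lra. }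
  assert (Cb : continuity_2d_pt G 0 b).
  { apply (exd_cont 3%nat). apply HG; rewrite ?Rabs_R0; try rewrite Rabs_right; lra. }
  assert (Cmb : continuity_2d_pt G 0 (- b)).
  { apply (exd_cont 3%nat). apply HG; rewrite ?Rabs_R0, ?Rabs_Ropp; try rewrite Rabs_right; lra. }
  destruct (Cb (mkposreal _ Gb)) as [eb Heb]. cbn [pos] in Heb.
  assert (Gmb' : 0 < - G 0 (- b)) by lra.
  destruct (Cmb (mkposreal _ Gmb')) as [ea Hea]. cbn [pos] in Hea.
  set (e1 := Rmin (Rmin ea eb) e).
  assert (He1 : 0 < e1) by (apply Rmin_glb_lt; [apply Rmin_glb_lt; apply cond_pos| exact He]).
  assert (He1e : e1 <= e) by apply Rmin_r.
  assert (He1a : e1 <= ea) by (eapply Rle_trans; [apply Rmin_l| apply Rmin_l]).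
  assert (He1b : e1 <= eb) by (eapply Rle_trans; [apply Rmin_l| apply Rmin_r]).
  assert (Pos : forall s, Rabs s < e1 -> 0 < G s b).
  { intros s Hs. assert (A : Rabs (s - 0) < eb) by (rewrite Rminus_0_r; lra).
    assert (A2 : Rabs (b - b) < eb) by (rewrite Rminus_diag_eq, Rabs_R0 by reflexivity; apply cond_pos).
    specialize (Heb s b A A2). absr. lra. }
  assert (Neg : forall s, Rabs s < e1 -> G s (- b) < 0).
  { intros s Hs. assert (A : Rabs (s - 0) < ea) by (rewrite Rminus_0_r; lra).
    assert (A2 : Rabs (- b - - b) < ea) by (rewrite Rminus_diag_eq, Rabs_R0 by reflexivity; apply cond_pos).
    specialize (Hea s (- b) A A2). absr. lra. }
  assert (Ex : forall s, Rabs s < e1 -> exists t, Rabs t < b /\ G s t = 0).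
  { intros s Hs.
    destruct (Ranalysis5.IVT_interv (fun t => G s t) (- b) b) as [z [Hz1 Hz2]].
    - intros t Ht. apply cont_of_ex_derive. apply (exd_dy 0%nat). apply HD1; [lra|].
      apply Rabs_def1; lra.
    - lra.
    - apply Neg; exact Hs.
    - apply Pos; exact Hs.
    - exists z. split; [|exact Hz2].
      assert (z <> b) by (intro E; subst z; pose proof (Pos s Hs); lra).
      assert (z <> - b) by (intro E; rewrite E in Hz2; pose proof (Neg s Hs); lra).
      apply Rabs_def1; lra. }
  set (phi := fun s => epsilon (inhabits 0) (fun t => Rabs t < b /\ G s t = 0)).
  assert (Hphi : forall s, Rabs s < e1 -> Rabs (phi s) < b /\ G s (phi s) = 0).
  { intros s Hs. apply (epsilon_spec (inhabits 0) (fun t => Rabs t < b /\ G s t = 0)). apply Ex; exact Hs. }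
  assert (Uniq : forall s t, Rabs s < e1 -> Rabs t < e -> G s t = 0 -> t = phi s).
  { intros s t Hs Ht HGt. destruct (Hphi s Hs) as [P1 P2].
    destruct (Rtotal_order t (phi s)) as [Hl|[Heq|Hg]]; [|exact Heq|].
    - exfalso. assert (G s t < G s (phi s)) by (apply Hmono; lra). lra.
    - exfalso. assert (G s (phi s) < G s t) by (apply Hmono; lra). lra. }
  exists e, e1, b, phi.
  split; [exact He1|]. split; [exact He1e|]. split; [exact Hed|]. split; [reflexivity|].
  split; [exact He|]. split; [exact Hpos|]. split; [exact Hphi|].
  split; [intros s t Hs Ht HGt; apply Uniq; [exact Hs|lra|exact HGt]|].
  intros s0 Hs0 eps Heps.
  set (ep := Rmin eps (b / 2)).
  assert (Hep : 0 < ep) by (apply Rmin_glb_lt; lra).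
  assert (Hep1 : ep <= eps) by apply Rmin_l.
  assert (Hep2 : ep <= b / 2) by apply Rmin_r.
  destruct (Hphi s0 Hs0) as [P1 P2].
  set (t0 := phi s0) in *.
  assert (Htp : Rabs (t0 + ep) < e) by (absr; apply Rabs_def1; lra).
  assert (Htm : Rabs (t0 - ep) < e) by (absr; apply Rabs_def1; lra).
  assert (Gp : 0 < G s0 (t0 + ep)) by (assert (G s0 t0 < G s0 (t0 + ep)) by (apply Hmono; lra); lra).
  assert (Gm : 0 < - G s0 (t0 - ep)) by (assert (G s0 (t0 - ep) < G s0 t0) by (apply Hmono; lra); lra).
  assert (Cp : continuity_2d_pt G s0 (t0 + ep)) by (apply (exd_cont 3%nat); apply HG; lra).
  assert (Cm : continuity_2d_pt G s0 (t0 - ep)) by (apply (exd_cont 3%nat); apply HG; lra).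
  destruct (Cp (mkposreal _ Gp)) as [ep1 Hp1]. cbn [pos] in Hp1.
  destruct (Cm (mkposreal _ Gm)) as [ep2 Hp2]. cbn [pos] in Hp2.
  exists (Rmin ep1 ep2). split; [apply Rmin_glb_lt; apply cond_pos|].
  intros s Hs Hs1.
  pose proof (Rmin_l ep1 ep2). pose proof (Rmin_r ep1 ep2).
  assert (Z : forall z : R, Rabs (z - z) = 0) by (intro; rewrite Rminus_diag_eq, Rabs_R0; reflexivity).
  assert (A1 : 0 < G s (t0 + ep)).
  { assert (W : Rabs (s - s0) < ep1) by lra. specialize (Hp1 s (t0 + ep) W ltac:(rewrite Z; apply cond_pos)). absr. lra. }
  assert (A2 : G s (t0 - ep) < 0).
  { assert (W : Rabs (s - s0) < ep2) by lra. specialize (Hp2 s (t0 - ep) W ltac:(rewrite Z; apply cond_pos)). absr. lra. }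
  destruct (Hphi s Hs1) as [Q1 Q2].
  assert (phi s < t0 + ep).
  { destruct (Rlt_or_le (phi s) (t0 + ep)) as [L|L]; [exact L|exfalso].
    destruct (Req_dec (phi s) (t0 + ep)) as [E|NE]; [rewrite <- E in A1; lra|].
    assert (G s (t0 + ep) < G s (phi s)) by (apply Hmono; lra). lra. }
  assert (t0 - ep < phi s).
  { destruct (Rlt_or_le (t0 - ep) (phi s)) as [L|L]; [exact L|exfalso].
    destruct (Req_dec (phi s) (t0 - ep)) as [E|NE]; [rewrite E in Q2; lra|].
    assert (G s (phi s) < G s (t0 - ep)) by (apply Hmono; lra). lra. }
  apply Rabs_def1; lra.
Qed.

Lemma ift_deriv (G : R -> R -> R) del e e1 b (phi : R -> R) :
  Dn 3 del G -> 0 < e1 -> e1 <= e -> e <= del -> b = e / 2 -> 0 < e ->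
  (forall u v, Rabs u < e -> Rabs v < e -> 0 < pd dY G u v) ->
  (forall s, Rabs s < e1 -> Rabs (phi s) < b /\ G s (phi s) = 0) ->
  (forall s0, Rabs s0 < e1 -> forall eps, 0 < eps -> exists eta, 0 < eta /\
       forall s, Rabs (s - s0) < eta -> Rabs s < e1 -> Rabs (phi s - phi s0) < eps) ->
  forall s0, Rabs s0 < e1 ->
    is_derive phi s0 (- (pd dX G s0 (phi s0) / pd dY G s0 (phi s0))).
Proof.
  intros HG He1 He1e Hed Hb He Hpos Hphi Hcont s0 Hs0.
  assert (HD1 : Dn 1 del G) by (apply Dn_le with 3%nat; [lia|exact HG]).
  destruct (Hphi s0 Hs0) as [P1 P2]. set (t0 := phi s0) in *.
  set (gx := pd dX G s0 t0). set (gy := pd dY G s0 t0).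
  assert (Hgy : 0 < gy) by (apply Hpos; lra).
  apply is_derive_Reals. intros eps Heps.
  assert (CQ : continuity_2d_pt (fun p q => p * / q) gx gy).
  { apply continuity_2d_pt_mult; [apply continuity_2d_pt_id1|].
    apply (continuity_2d_pt_inv (fun p q => q)); [apply continuity_2d_pt_id2| lra]. }
  destruct (CQ (mkposreal _ Heps)) as [rh Hrh]. cbn [pos] in Hrh.
  assert (Cx : continuity_2d_pt (pd dX G) s0 t0) by (apply (exd_cont 2%nat); apply exd_proj_x; apply HG; lra).
  assert (Cy : continuity_2d_pt (pd dY G) s0 t0) by (apply (exd_cont 2%nat); apply exd_proj_y; apply HG; lra).
  destruct (Cx rh) as [s1 Hs1]. destruct (Cy rh) as [s2 Hs2].
  assert (Hsig : 0 < Rmin s1 s2) by (apply Rmin_glb_lt; apply cond_pos).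
  destruct (Hcont s0 Hs0 _ Hsig) as [eta0 [Heta0 Hc0]].
  set (dl := Rmin (Rmin eta0 (Rmin s1 s2)) (e1 - Rabs s0)).
  assert (Hdl : 0 < dl) by (apply Rmin_glb_lt; [apply Rmin_glb_lt; assumption| lra]).
  assert (D1 : dl <= eta0) by (eapply Rle_trans; [apply Rmin_l| apply Rmin_l]).
  assert (D2 : dl <= Rmin s1 s2) by (eapply Rle_trans; [apply Rmin_l| apply Rmin_r]).
  assert (D3 : dl <= e1 - Rabs s0) by apply Rmin_r.
  pose proof (Rmin_l s1 s2). pose proof (Rmin_r s1 s2).
  exists (mkposreal _ Hdl). intros hh Hh0 Hh. cbn [pos] in Hh.
  set (s := s0 + hh).
  assert (Hs : Rabs s < e1).
  { unfold s. eapply Rle_lt_trans; [apply Rabs_triang|]. lra. }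
  assert (Hss0 : s - s0 = hh) by (unfold s; ring).
  destruct (Hphi s Hs) as [Q1 Q2].
  assert (Hps : Rabs (phi s - t0) < Rmin s1 s2) by (apply Hc0; [rewrite Hss0; lra| exact Hs]).
  destruct (MVT_gen (fun t => G s t) t0 (phi s) (fun t => pd dY G s t)) as [xi [Hxi Exi]].
  { intros x Hx. apply (Derive_correct (fun t => G s t)). apply (exd_dy 0%nat). apply HD1; [lra|].
    assert (Rabs x < e) by (eapply between_abs; [split; apply Rlt_le; apply Hx| |]; lra). lra. }
  { intros x Hx. apply cont_of_ex_derive. apply (exd_dy 0%nat). apply HD1; [lra|].
    assert (Rabs x < e) by (eapply between_abs; [exact Hx| |]; lra). lra. }
  assert (Hxie : Rabs xi < e) by (eapply between_abs; [exact Hxi| |]; lra).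
  pose proof (between_dist _ _ _ Hxi) as Dxi.
  destruct (MVT_gen (fun u => G u t0) s0 s (fun u => pd dX G u t0)) as [et [Het Eet]].
  { intros x Hx. apply (Derive_correct (fun u => G u t0)). apply (exd_dx 0%nat). apply HD1; [|lra].
    assert (Rabs x < e1) by (eapply between_abs; [split; apply Rlt_le; apply Hx| |]; lra). lra. }
  { intros x Hx. apply cont_of_ex_derive. apply (exd_dx 0%nat). apply HD1; [|lra].
    assert (Rabs x < e1) by (eapply between_abs; [exact Hx| |]; lra). lra. }
  pose proof (between_dist _ _ _ Het) as Det.
  cbv beta in Exi, Eet.
  assert (Hq : 0 < pd dY G s xi) by (apply Hpos; lra).
  assert (Key : phi s - t0 = - (pd dX G et t0 / pd dY G s xi) * hh).
  { rewrite Hss0 in Eet. field_simplify_eq; [|lra]. nra. }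
  replace ((phi s - phi s0) / hh) with (- (pd dX G et t0 / pd dY G s xi)).
  2:{ fold t0. rewrite Key. field. split; [lra| exact Hh0]. }
  assert (Z : Rabs (t0 - t0) = 0) by (rewrite Rminus_diag_eq, Rabs_R0; reflexivity).
  assert (A1 : Rabs (pd dX G et t0 - gx) < rh).
  { apply Hs1; [rewrite Hss0 in Det; lra| rewrite Z; apply cond_pos]. }
  assert (A2 : Rabs (pd dY G s xi - gy) < rh).
  { apply Hs2; [rewrite Hss0; lra| lra]. }
  specialize (Hrh _ _ A1 A2).
  replace (- (pd dX G et t0 / pd dY G s xi) - - (gx / gy))
    with (- (pd dX G et t0 * / pd dY G s xi - gx * / gy)) by (unfold Rdiv; ring).
  rewrite Rabs_Ropp. exact Hrh.
Qed.

Lemma ift_pos (G : R -> R -> R) del : 0 < del -> Dn 3 del G -> G 0 0 = 0 -> 0 < pd dY G 0 0 ->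
  exists e1 b (phi : R -> R), 0 < e1 /\ e1 <= del /\ 0 < b /\ b <= del /\ phi 0 = 0 /\
   (forall s, Rabs s < e1 -> Rabs (phi s) < b /\ G s (phi s) = 0) /\
   (forall s t, Rabs s < e1 -> Rabs t < b -> G s t = 0 -> t = phi s) /\
   C2_on e1 phi /\
   Derive phi 0 = - (pd dX G 0 0 / pd dY G 0 0) /\
   (pd dX G 0 0 = 0 -> Derive_n phi 2 0 = - (pd dX (pd dX G) 0 0 / pd dY G 0 0)).
Proof.
  intros Hdel HG H0 Hy.
  destruct (ift_base G del Hdel HG H0 Hy) as [e [e1 [b [phi [He1 [He1e [Hed [Hb [He [Hpos [Hphi [Huniq Hcont]]]]]]]]]]]].
  pose proof (ift_deriv G del e e1 b phi HG He1 He1e Hed Hb He Hpos Hphi Hcont) as Hder.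
  assert (Hphi0 : phi 0 = 0).
  { symmetry. apply Huniq; rewrite ?Rabs_R0; [lra|lra|exact H0]. }
  set (Q := fun u v => - (pd dX G u v / pd dY G u v)).
  set (Hf := fun u v => - (((pd dX (pd dX G) u v * 1 + pd dY (pd dX G) u v * Q u v) * pd dY G u v
                          - pd dX G u v * (pd dX (pd dY G) u v * 1 + pd dY (pd dY G) u v * Q u v))
                          / (pd dY G u v * pd dY G u v))).
  set (Psi := fun t => Q t (phi t)).
  set (Ef := fun t => Hf t (phi t)).
  assert (Inb : forall s, Rabs s < e1 -> Rabs s < del /\ Rabs (phi s) < del).
  { intros s Hs. destruct (Hphi s Hs). split; lra. }
  assert (HD : forall s, Rabs s < e1 -> Derive phi s = Psi s).
  { intros s Hs. apply is_derive_unique. apply Hder; exact Hs. }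
  assert (HL : forall s, Rabs s < e1 -> locally s (fun t => Psi t = Derive phi t)).
  { intros s Hs. eapply filter_imp; [|exact (loc_int s e1 Hs)]. intros t Ht. symmetry. apply HD. exact Ht. }
  assert (HGy : forall s, Rabs s < e1 -> 0 < pd dY G s (phi s)).
  { intros s Hs. destruct (Hphi s Hs). apply Hpos; lra. }
  assert (HPsi : forall s, Rabs s < e1 -> is_derive Psi s (Ef s)).
  { intros s Hs. destruct (Inb s Hs) as [I1 I2].
    assert (Dx : is_derive (fun t => pd dX G t (phi t)) s
        (pd dX (pd dX G) s (phi s) * 1 + pd dY (pd dX G) s (phi s) * Psi s)).
    { apply is_derive_Reals.
      exact (derivable_pt_lim_comp_2d (pd dX G) id phi s _ _ _ _
              (diff_of_exd2 _ _ _ (Dn_loc 2 del _ _ _ (Dn_pdx 2 del G HG) I1 I2))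
              (derivable_pt_lim_id s) (proj1 (is_derive_Reals _ _ _) (Hder s Hs))). }
    assert (Dy : is_derive (fun t => pd dY G t (phi t)) s
        (pd dX (pd dY G) s (phi s) * 1 + pd dY (pd dY G) s (phi s) * Psi s)).
    { apply is_derive_Reals.
      exact (derivable_pt_lim_comp_2d (pd dY G) id phi s _ _ _ _
              (diff_of_exd2 _ _ _ (Dn_loc 2 del _ _ _ (Dn_pdy 2 del G HG) I1 I2))
              (derivable_pt_lim_id s) (proj1 (is_derive_Reals _ _ _) (Hder s Hs))). }
    pose proof (HGy s Hs) as Hg.
    pose proof (isd_opp _ _ _ (is_derive_div _ _ _ _ _ Dx Dy ltac:(lra))) as R.
    unfold Ef, Hf. unfold Psi in R |- *. cbv beta in R.
    replace (- (((pd dX (pd dX G) s (phi s) * 1 + pd dY (pd dX G) s (phi s) * Q s (phi s)) *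
           pd dY G s (phi s) - pd dX G s (phi s) * (pd dX (pd dY G) s (phi s) * 1 +
           pd dY (pd dY G) s (phi s) * Q s (phi s))) / (pd dY G s (phi s) * pd dY G s (phi s))))
      with (- ((((pd dX (pd dX G) s (phi s) * 1 + pd dY (pd dX G) s (phi s) * Q s (phi s)) *
           pd dY G s (phi s) - pd dX G s (phi s) * (pd dX (pd dY G) s (phi s) * 1 +
           pd dY (pd dY G) s (phi s) * Q s (phi s))) / pd dY G s (phi s) ^ 2)))
      by (field; lra).
    exact R. }
  assert (HE : forall s, Rabs s < e1 -> Derive_n phi 2 s = Ef s).
  { intros s Hs. change (Derive_n phi 2 s) with (Derive (Derive phi) s). rewrite (Derive_ext_loc (Derive phi) Psi s).
    - apply is_derive_unique. apply HPsi; exact Hs.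
    - eapply filter_imp; [|exact (loc_int s e1 Hs)]. intros t Ht. apply HD. exact Ht. }
  exists e1, b, phi. split; [exact He1|]. split; [lra|]. split; [lra|]. split; [lra|].
  split; [exact Hphi0|]. split; [exact Hphi|]. split; [exact Huniq|].
  split; [|split].
  - intros t Ht. split; [eexists; apply Hder; exact Ht|].
    split; [apply ex_derive_ext_loc with Psi; [apply HL; exact Ht| eexists; apply HPsi; exact Ht]|].
    split.
    + apply (continuous_ext_loc (Derive phi) Psi t); [apply HL; exact Ht|].
      apply (ex_derive_continuous (K := R_AbsRing) Psi t). eexists; apply HPsi; exact Ht.
    + apply (continuous_ext_loc (Derive_n phi 2) Ef t).
      * eapply filter_imp; [|exact (loc_int t e1 Ht)]. intros s Hs. symmetry. apply HE. exact Hs.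
      * apply continuity_pt_filterlim. unfold Ef.
        destruct (Inb t Ht) as [I1 I2].
        pose proof (HG t (phi t) I1 I2) as X.
        assert (C0 : continuity_2d_pt (pd dY G) t (phi t)) by (apply (exd_cont 2%nat); apply exd_proj_y; exact X).
        assert (C1 : continuity_2d_pt (pd dX G) t (phi t)) by (apply (exd_cont 2%nat); apply exd_proj_x; exact X).
        assert (C2 : continuity_2d_pt (pd dX (pd dX G)) t (phi t)) by (apply (exd_cont 1%nat); apply exd_proj_x; apply exd_proj_x; exact X).
        assert (C3 : continuity_2d_pt (pd dY (pd dX G)) t (phi t)) by (apply (exd_cont 1%nat); apply exd_proj_y; apply exd_proj_x; exact X).
        assert (C4 : continuity_2d_pt (pd dX (pd dY G)) t (phi t)) by (apply (exd_cont 1%nat); apply exd_proj_x; apply exd_proj_y; exact X).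
        assert (C5 : continuity_2d_pt (pd dY (pd dY G)) t (phi t)) by (apply (exd_cont 1%nat); apply exd_proj_y; apply exd_proj_y; exact X).
        pose proof (HGy t Ht) as Hg.
        assert (CQ : continuity_2d_pt Q t (phi t)).
        { unfold Q. apply continuity_2d_pt_opp. unfold Rdiv. apply continuity_2d_pt_mult; [exact C1|].
          apply continuity_2d_pt_inv; [exact C0| lra]. }
        apply (cont_comp_curve Hf (fun s => s) phi t).
        -- unfold Hf. apply continuity_2d_pt_opp. unfold Rdiv. apply continuity_2d_pt_mult.
           ++ apply continuity_2d_pt_minus; apply continuity_2d_pt_mult; try assumption;
              apply continuity_2d_pt_plus; apply continuity_2d_pt_mult; try assumption; apply continuity_2d_pt_const.
           ++ apply continuity_2d_pt_inv; [apply continuity_2d_pt_mult; assumption| nra].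
        -- apply continuity_pt_id.
        -- apply cont_of_ex_derive. eexists; apply Hder; exact Ht.
  - rewrite HD by (rewrite Rabs_R0; lra). unfold Psi, Q. rewrite Hphi0. reflexivity.
  - intro Hx0. rewrite HE by (rewrite Rabs_R0; lra). unfold Ef, Hf, Q. rewrite Hphi0, Hx0.
    field. lra.
Qed.

Lemma pd_opp v f x y : pd v (fun u w => - f u w) x y = - pd v f x y.
Proof. destruct v; simpl; apply Derive_opp. Qed.

Lemma ift (G : R -> R -> R) del : 0 < del -> Dn 3 del G -> G 0 0 = 0 -> pd dY G 0 0 <> 0 ->
  exists e1 b (phi : R -> R), 0 < e1 /\ e1 <= del /\ 0 < b /\ b <= del /\ phi 0 = 0 /\
   (forall s, Rabs s < e1 -> Rabs (phi s) < b /\ G s (phi s) = 0) /\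
   (forall s t, Rabs s < e1 -> Rabs t < b -> G s t = 0 -> t = phi s) /\
   C2_on e1 phi /\
   Derive phi 0 = - (pd dX G 0 0 / pd dY G 0 0) /\
   (pd dX G 0 0 = 0 -> Derive_n phi 2 0 = - (pd dX (pd dX G) 0 0 / pd dY G 0 0)).
Proof.
  intros Hdel HG H0 Hy.
  destruct (Rlt_or_le 0 (pd dY G 0 0)) as [Hp|Hn].
  - apply ift_pos; assumption.
  - set (G' := fun u v => - G u v).
    assert (HG' : Dn 3 del G') by (apply Dn_opp; exact HG).
    assert (H0' : G' 0 0 = 0) by (unfold G'; rewrite H0; ring).
    assert (Hy' : 0 < pd dY G' 0 0) by (unfold G'; rewrite pd_opp; lra).
    destruct (ift_pos G' del Hdel HG' H0' Hy') as [e1 [b [phi [A1 [A2 [A3 [A4 [A5 [A6 [A7 [A8 [A9 A10]]]]]]]]]]]].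
    exists e1, b, phi. split; [exact A1|]. split; [exact A2|]. split; [exact A3|]. split; [exact A4|].
    split; [exact A5|].
    split; [intros s Hs; destruct (A6 s Hs) as [B1 B2]; split; [exact B1| unfold G' in B2; lra]|].
    split; [intros s t Hs Ht Hz; apply A7; [exact Hs|exact Ht| unfold G'; rewrite Hz; ring]|].
    split; [exact A8|].
    split.
    + rewrite A9. unfold G'. rewrite !pd_opp. field. lra.
    + intro Hx. rewrite A10.
      * unfold G'. rewrite pd_opp.
        assert (E : pd dX (pd dX (fun u v => - G u v)) 0 0 = - pd dX (pd dX G) 0 0).
        { simpl. rewrite <- Derive_opp. apply Derive_ext. intro t. apply Derive_opp. }
        rewrite E. field. lra.
      * unfold G'. rewrite pd_opp, Hx. ring.
Qed.

Lemma poly_ex_derive (c : nat -> R) n x : ex_derive (fun x => sum_f_R0 (fun m => c m * x ^ m) n) x.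
Proof.
  induction n as [|n IH].
  - simpl. auto_derive. exact I.
  - simpl. apply exR_plus; [exact IH|]. auto_derive. exact I.
Qed.

Lemma poly_zero n : forall (c : nat -> R) del K, 0 < del ->
  (forall x, 0 < x < del -> Rabs (sum_f_R0 (fun m => c m * x ^ m) n) <= K * x ^ (S n)) ->
  forall m, (m <= n)%nat -> c m = 0.
Proof.
  assert (Z : forall (c : nat -> R) nn del K, 0 < del ->
    (forall x, 0 < x < del -> Rabs (sum_f_R0 (fun m => c m * x ^ m) nn) <= K * x ^ (S nn)) -> c O = 0).
  { clear n. intros c n del K Hdel H.
    destruct (Req_dec (c O) 0) as [E|NE]; [exact E|exfalso].
    pose proof (cont_of_ex_derive _ 0 (poly_ex_derive c n 0)) as Hc.
    assert (Hc0 : sum_f_R0 (fun m => c m * 0 ^ m) n = c O).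
    { clear H Hc. induction n as [|n IH]; simpl; [ring| rewrite IH; ring]. }
    assert (Hp : 0 < Rabs (c O) / 2) by (pose proof (Rabs_pos_lt _ NE); lra).
    destruct (Hc _ Hp) as [eta [Heta Hc']].
    set (x := Rmin (Rmin (eta / 2) (del / 2)) (Rmin (1/2) (Rabs (c O) / (4 * (Rabs K + 1))))).
    assert (Hx0 : 0 < x).
    { unfold x. pose proof (Rabs_pos K). repeat apply Rmin_glb_lt; try lra.
      apply Rdiv_lt_0_compat; [exact (Rabs_pos_lt _ NE)| lra]. }
    assert (Hx1 : x <= eta / 2) by (unfold x; eapply Rle_trans; [apply Rmin_l| apply Rmin_l]).
    assert (Hx2 : x <= del / 2) by (unfold x; eapply Rle_trans; [apply Rmin_l| apply Rmin_r]).
    assert (Hx3 : x <= 1/2) by (unfold x; eapply Rle_trans; [apply Rmin_r| apply Rmin_l]).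
    assert (Hx4 : x <= Rabs (c O) / (4 * (Rabs K + 1))) by (unfold x; eapply Rle_trans; [apply Rmin_r| apply Rmin_r]).
    specialize (H x ltac:(lra)).
    assert (Hd : Rabs (sum_f_R0 (fun m => c m * x ^ m) n - c O) < Rabs (c O) / 2).
    { assert (W : D_x no_cond 0 x /\ dist R_met x 0 < eta).
      { split; [split; [exact I| lra]|]. simpl. unfold R_dist. rewrite Rminus_0_r, Rabs_right; lra. }
      specialize (Hc' x W). simpl in Hc'. unfold R_dist in Hc'. rewrite Hc0 in Hc'. exact Hc'. }
    assert (Hxn : x ^ S n <= x).
    { assert (x ^ n <= 1 ^ n) by (apply pow_incr; lra). rewrite pow1 in H0.
      change (x ^ S n) with (x * x ^ n). assert (0 <= x ^ n) by (apply pow_le; lra). nra. }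
    assert (HK : K * x ^ S n <= (Rabs K + 1) * x).
    { pose proof (Rle_abs K). pose proof (Rabs_pos K).
      assert (0 <= x ^ S n) by (apply pow_le; lra).
      apply Rle_trans with (Rabs K * x ^ S n); [nra|]. nra. }
    assert (HK2 : (Rabs K + 1) * x <= Rabs (c O) / 4).
    { pose proof (Rabs_pos K). apply (Rmult_le_compat_l (Rabs K + 1)) in Hx4; [|lra].
      replace ((Rabs K + 1) * (Rabs (c O) / (4 * (Rabs K + 1)))) with (Rabs (c O) / 4) in Hx4 by (field; lra).
      lra. }
    pose proof (Rabs_triang_inv (c O) (sum_f_R0 (fun m => c m * x ^ m) n)).
    rewrite Rabs_minus_sym in Hd. lra. }
  induction n as [|n IH]; intros c del K Hdel H m Hm.
  - inversion Hm. eapply Z; eassumption.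
  - destruct m as [|m].
    + eapply Z; eassumption.
    + assert (Hc0 : c O = 0) by (eapply Z; eassumption).
      apply (IH (fun m => c (S m)) del K Hdel); [|lia].
      intros x Hx. specialize (H x Hx).
      assert (E : sum_f_R0 (fun m => c m * x ^ m) (S n) = x * sum_f_R0 (fun m => c (S m) * x ^ m) n).
      { rewrite decomp_sum by lia. simpl pred. rewrite Hc0, scal_sum. rewrite Rmult_0_l, Rplus_0_l.
        apply sum_eq. intros i _. simpl. ring. }
      rewrite E, Rabs_mult, Rabs_right in H by lra.
      simpl in H |- *.
      apply (Rmult_le_reg_l x); [lra|]. lra.
Qed.

Lemma DL4_eq f u v : DL_pol 4 f 0 0 u v =
  partial_derive 0 0 f 0 0 + partial_derive 1 0 f 0 0 * u + partial_derive 0 1 f 0 0 * v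
  + partial_derive 2 0 f 0 0 / 2 * u ^ 2 + partial_derive 1 1 f 0 0 * u * v + partial_derive 0 2 f 0 0 / 2 * v ^ 2
  + partial_derive 3 0 f 0 0 / 6 * u ^ 3 + partial_derive 2 1 f 0 0 / 2 * u ^ 2 * v
  + partial_derive 1 2 f 0 0 / 2 * u * v ^ 2 + partial_derive 0 3 f 0 0 / 6 * v ^ 3
  + partial_derive 4 0 f 0 0 / 24 * u ^ 4 + partial_derive 3 1 f 0 0 / 6 * u ^ 3 * v
  + partial_derive 2 2 f 0 0 / 4 * u ^ 2 * v ^ 2 + partial_derive 1 3 f 0 0 / 6 * u * v ^ 3
  + partial_derive 0 4 f 0 0 / 24 * v ^ 4.
Proof.
  unfold DL_pol, differential. cbn -[partial_derive Derive_n]. unfold Binomial.C. cbn -[partial_derive Derive_n].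
  field.
Qed.

Definition Qp (q : nat -> nat -> R) (u v : R) : R :=
  q 0%nat 0%nat + q 1%nat 0%nat * u + q 0%nat 1%nat * v + q 2%nat 0%nat * u ^ 2 + q 1%nat 1%nat * u * v + q 0%nat 2%nat * v ^ 2
  + q 3%nat 0%nat * u ^ 3 + q 2%nat 1%nat * u ^ 2 * v + q 1%nat 2%nat * u * v ^ 2 + q 0%nat 3%nat * v ^ 3
  + q 4%nat 0%nat * u ^ 4 + q 3%nat 1%nat * u ^ 3 * v + q 2%nat 2%nat * u ^ 2 * v ^ 2 + q 1%nat 3%nat * u * v ^ 3 + q 0%nat 4%nat * v ^ 4.

Lemma line_coeffs (q : nat -> nat -> R) rh K : 0 < rh ->
  (forall l u, Rabs l <= 1 -> 0 < u < rh -> Rabs (Qp q u (l * u)) <= K * u ^ 5) ->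
  q 0%nat 0%nat = 0 /\ q 1%nat 0%nat = 0 /\ q 0%nat 1%nat = 0 /\ q 2%nat 0%nat = 0 /\ q 1%nat 1%nat = 0 /\ q 0%nat 2%nat = 0 /\
  q 3%nat 0%nat = 0 /\ q 2%nat 1%nat = 0 /\ q 4%nat 0%nat = 0.
Proof.
  intros Hrh H.
  assert (L : forall l, Rabs l <= 1 -> forall m, (m <= 4)%nat ->
     (fun p => match p with
               | 0 => q 0%nat 0%nat
               | 1 => q 1%nat 0%nat + q 0%nat 1%nat * l
               | 2 => q 2%nat 0%nat + q 1%nat 1%nat * l + q 0%nat 2%nat * l ^ 2
               | 3 => q 3%nat 0%nat + q 2%nat 1%nat * l + q 1%nat 2%nat * l ^ 2 + q 0%nat 3%nat * l ^ 3
               | _ => q 4%nat 0%nat + q 3%nat 1%nat * l + q 2%nat 2%nat * l ^ 2 + q 1%nat 3%nat * l ^ 3 + q 0%nat 4%nat * l ^ 4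
               end) m = 0).
  { intros l Hl. apply (poly_zero 4 _ rh K Hrh). intros x Hx.
    specialize (H l x Hl Hx). unfold Qp in H. simpl. 
    replace (q 0%nat 0%nat * 1 + (q 1%nat 0%nat + q 0%nat 1%nat * l) * (x * 1) +
      (q 2%nat 0%nat + q 1%nat 1%nat * l + q 0%nat 2%nat * (l * (l * 1))) * (x * (x * 1)) +
      (q 3%nat 0%nat + q 2%nat 1%nat * l + q 1%nat 2%nat * (l * (l * 1)) + q 0%nat 3%nat * (l * (l * (l * 1)))) * (x * (x * (x * 1))) +
      (q 4%nat 0%nat + q 3%nat 1%nat * l + q 2%nat 2%nat * (l * (l * 1)) + q 1%nat 3%nat * (l * (l * (l * 1))) +
       q 0%nat 4%nat * (l * (l * (l * (l * 1))))) * (x * (x * (x * (x * 1)))))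
      with (q 0%nat 0%nat + q 1%nat 0%nat * x + q 0%nat 1%nat * (l * x) + q 2%nat 0%nat * x ^ 2 + q 1%nat 1%nat * x * (l * x) +
      q 0%nat 2%nat * (l * x) ^ 2 + q 3%nat 0%nat * x ^ 3 + q 2%nat 1%nat * x ^ 2 * (l * x) + q 1%nat 2%nat * x * (l * x) ^ 2 +
      q 0%nat 3%nat * (l * x) ^ 3 + q 4%nat 0%nat * x ^ 4 + q 3%nat 1%nat * x ^ 3 * (l * x) + q 2%nat 2%nat * x ^ 2 * (l * x) ^ 2 +
      q 1%nat 3%nat * x * (l * x) ^ 3 + q 0%nat 4%nat * (l * x) ^ 4) by ring.
    exact H. }
  assert (A0 : Rabs 0 <= 1) by (rewrite Rabs_R0; lra).
  assert (A1 : Rabs 1 <= 1) by (rewrite Rabs_R1; lra).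
  assert (A2 : Rabs (-1) <= 1) by (rewrite Rabs_left; lra).
  assert (A3 : Rabs (1/2) <= 1) by (rewrite Rabs_right; lra).
  pose proof (L 0 A0) as L0. pose proof (L 1 A1) as L1. pose proof (L (-1) A2) as L2. pose proof (L (1/2) A3) as L3.
  pose proof (L0 0%nat ltac:(lia)) as E00. simpl in E00.
  pose proof (L0 1%nat ltac:(lia)) as E01. simpl in E01.
  pose proof (L0 2%nat ltac:(lia)) as E02. simpl in E02.
  pose proof (L0 3%nat ltac:(lia)) as E03. simpl in E03.
  pose proof (L0 4%nat ltac:(lia)) as E04. simpl in E04.
  pose proof (L1 1%nat ltac:(lia)) as E11. simpl in E11.
  pose proof (L1 2%nat ltac:(lia)) as E12. simpl in E12.
  pose proof (L1 3%nat ltac:(lia)) as E13. simpl in E13.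
  pose proof (L2 2%nat ltac:(lia)) as E22. simpl in E22.
  pose proof (L2 3%nat ltac:(lia)) as E23. simpl in E23.
  pose proof (L3 3%nat ltac:(lia)) as E33. simpl in E33.
  repeat split; lra.
Qed.

Lemma sqrt_bound2 u l : 0 < u -> Rabs l <= 1 -> sqrt (u ^ 2 + (l * u) ^ 2) <= 2 * u.
Proof.
  intros Hu Hl. rewrite <- (sqrt_square (2 * u)) by lra.
  apply sqrt_le_1_alt. assert (l * l <= 1).
  { apply Rabs_le_between in Hl. nra. }
  nra.
Qed.

Lemma derivs0 (h : R -> R -> R) del0 M dm k a b c d A B C D E :
  0 < del0 -> Dn 5 del0 h -> 0 < dm ->
  (forall x y, disk dm x y -> Rabs (h x y - mongeP k a b c d A B C D E x y) <= M * (sqrt (x ^ 2 + y ^ 2)) ^ 5) ->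
  partial_derive 0 0 h 0 0 = 0 /\ partial_derive 1 0 h 0 0 = 0 /\ partial_derive 0 1 h 0 0 = 0 /\
  partial_derive 2 0 h 0 0 = 0 /\ partial_derive 1 1 h 0 0 = 0 /\ partial_derive 0 2 h 0 0 = k /\
  partial_derive 3 0 h 0 0 = a /\ partial_derive 2 1 h 0 0 = d /\ partial_derive 4 0 h 0 0 = A.
Proof.
  intros Hdel HD Hdm HP.
  assert (L0 : locally_2d (fun u v => ex_diff_n h (S 4) u v) 0 0).
  { apply (Dn_loc 5 del0 h 0 0 HD); rewrite Rabs_R0; exact Hdel. }
  destruct (Taylor_Lagrange_2d h 4 0 0 L0) as [Dc [eD HeD]].
  set (q := fun i j : nat => match i, j with
     | 0, 0 => partial_derive 0 0 h 0 0
     | 1, 0 => partial_derive 1 0 h 0 0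
     | 0, 1 => partial_derive 0 1 h 0 0
     | 2, 0 => partial_derive 2 0 h 0 0 / 2
     | 1, 1 => partial_derive 1 1 h 0 0
     | 0, 2 => partial_derive 0 2 h 0 0 / 2 - k / 2
     | 3, 0 => partial_derive 3 0 h 0 0 / 6 - a / 6
     | 2, 1 => partial_derive 2 1 h 0 0 / 2 - d / 2
     | 1, 2 => partial_derive 1 2 h 0 0 / 2 - b / 2
     | 0, 3 => partial_derive 0 3 h 0 0 / 6 - c / 6
     | 4, 0 => partial_derive 4 0 h 0 0 / 24 - A / 24
     | 3, 1 => partial_derive 3 1 h 0 0 / 6 - B / 6
     | 2, 2 => partial_derive 2 2 h 0 0 / 4 - C / 4
     | 1, 3 => partial_derive 1 3 h 0 0 / 6 - D / 6
     | 0, 4 => partial_derive 0 4 h 0 0 / 24 - E / 24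
     | _, _ => 0 end).
  assert (HQ : forall u v, DL_pol 4 h 0 0 u v - mongeP k a b c d A B C D E u v = Qp q u v).
  { intros u v. rewrite DL4_eq. unfold Qp, mongeP, q. ring. }
  set (rh := Rmin (Rmin eD (dm / 2)) 1).
  assert (Hrh : 0 < rh) by (unfold rh; repeat apply Rmin_glb_lt; try apply cond_pos; lra).
  assert (R1 : rh <= eD) by (unfold rh; eapply Rle_trans; [apply Rmin_l|apply Rmin_l]).
  assert (R2 : rh <= dm / 2) by (unfold rh; eapply Rle_trans; [apply Rmin_l|apply Rmin_r]).
  destruct (line_coeffs q rh (Rabs Dc + 32 * Rabs M) Hrh) as [Q00 [Q10 [Q01 [Q20 [Q11 [Q02 [Q30 [Q21 Q40]]]]]]]].
  { intros l u Hl Hu.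
    assert (Hlu : Rabs (l * u) <= u).
    { rewrite Rabs_mult, (Rabs_right u) by lra. apply Rabs_le_between in Hl. rewrite <- (Rmult_1_l u) at 2.
      apply Rmult_le_compat_r; [lra|]. apply Rabs_le. lra. }
    assert (T1 := HeD u (l * u) ltac:(rewrite Rminus_0_r, Rabs_right; lra) ltac:(rewrite Rminus_0_r; lra)).
    rewrite !Rminus_0_r in T1.
    rewrite (Rabs_right u), Rmax_left in T1 by lra.
    assert (Hsq : (l * u) ^ 2 <= u ^ 2).
    { apply Rabs_le_between in Hlu. nra. }
    assert (Hdisk : disk dm u (l * u)).
    { unfold disk. nra. }
    pose proof (HP u (l * u) Hdisk) as T2.
    assert (S1 : sqrt (u ^ 2 + (l * u) ^ 2) ^ 5 <= (2 * u) ^ 5).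
    { apply pow_incr. split; [apply sqrt_pos| apply sqrt_bound2; lra]. }
    assert (S2 : M * sqrt (u ^ 2 + (l * u) ^ 2) ^ 5 <= 32 * Rabs M * u ^ 5).
    { pose proof (Rle_abs M). pose proof (Rabs_pos M).
      assert (0 <= sqrt (u ^ 2 + (l * u) ^ 2) ^ 5) by (apply pow_le; apply sqrt_pos).
      replace (32 * Rabs M * u ^ 5) with (Rabs M * (2 * u) ^ 5) by ring.
      apply Rle_trans with (Rabs M * sqrt (u ^ 2 + (l * u) ^ 2) ^ 5); [nra|].
      apply Rmult_le_compat_l; assumption. }
    assert (S3 : Dc * u ^ 5 <= Rabs Dc * u ^ 5).
    { apply Rmult_le_compat_r; [apply pow_le; lra| apply Rle_abs]. }
    rewrite <- HQ.
    replace (DL_pol 4 h 0 0 u (l * u) - mongeP k a b c d A B C D E u (l * u))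
      with (- (h u (l * u) - DL_pol 4 h 0 0 u (l * u)) + (h u (l * u) - mongeP k a b c d A B C D E u (l * u))) by ring.
    eapply Rle_trans; [apply Rabs_triang|]. rewrite Rabs_Ropp. lra. }
  unfold q in *. cbv iota beta in *.
  repeat split; lra.
Qed.

Lemma box_disk rho u v : 0 < rho -> Rabs u < rho / 2 -> Rabs v < rho / 2 -> disk rho u v.
Proof.
  intros Hr Hu Hv. unfold disk.
  apply Rabs_def2 in Hu. apply Rabs_def2 in Hv. nra.
Qed.

Lemma Dn_word r rho h w m : Cr_on r (disk rho) h -> 0 < rho -> (length w + m <= r)%nat ->
  Dn m (rho / 2) (pds w h).
Proof.
  intros H Hr Hl u v Hu Hv.
  apply (Cr_exdiff m (disk rho)); [|apply box_disk; assumption].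
  apply Cr_le with (r - length w)%nat; [lia|]. apply Cr_pds; [lia|exact H].
Qed.

Lemma DR_minus (f g : R -> R) x : ex_derive f x -> ex_derive g x -> Derive (fun z => f z - g z) x = Derive f x - Derive g x.
Proof. intros. apply (Derive_minus f g); assumption. Qed.
Lemma exR_minus (f g : R -> R) x : ex_derive f x -> ex_derive g x -> ex_derive (fun z => f z - g z) x.
Proof. intros. apply (ex_derive_minus f g); assumption. Qed.

Lemma pd_F (f1 f2 f3 : R -> R -> R) v x y : ex_pd v f1 x y -> ex_pd v f2 x y -> ex_pd v f3 x y ->
  pd v (fun u w => f1 u w * f2 u w - f3 u w * f3 u w) x y =
  pd v f1 x y * f2 x y + f1 x y * pd v f2 x y - (pd v f3 x y * f3 x y + f3 x y * pd v f3 x y).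
Proof.
  intros H1 H2 H3. destruct v; simpl in *.
  - rewrite (DR_minus (fun t => f1 t y * f2 t y) (fun t => f3 t y * f3 t y)); [|apply exR_mult; assumption|apply exR_mult; assumption].
    rewrite (DR_mult (fun t => f1 t y) (fun t => f2 t y)) by assumption.
    rewrite (DR_mult (fun t => f3 t y) (fun t => f3 t y)) by assumption. reflexivity.
  - rewrite (DR_minus (fun t => f1 x t * f2 x t) (fun t => f3 x t * f3 x t)); [|apply exR_mult; assumption|apply exR_mult; assumption].
    rewrite (DR_mult (fun t => f1 x t) (fun t => f2 x t)) by assumption.
    rewrite (DR_mult (fun t => f3 x t) (fun t => f3 x t)) by assumption. reflexivity.
Qed.

Lemma exd_expd_x n f x y : ex_diff_n f (S n) x y -> ex_pd dX f x y.
Proof. apply exd_dx. Qed.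
Lemma exd_expd_y n f x y : ex_diff_n f (S n) x y -> ex_pd dY f x y.
Proof. apply exd_dy. Qed.

Lemma D2_F (f1 f2 f3 : R -> R -> R) del : 0 < del -> Dn 2 del f1 -> Dn 2 del f2 -> Dn 2 del f3 ->
  pd dX (pd dX (fun u w => f1 u w * f2 u w - f3 u w * f3 u w)) 0 0 =
  pd dX (pd dX f1) 0 0 * f2 0 0 + 2 * (pd dX f1 0 0 * pd dX f2 0 0) + f1 0 0 * pd dX (pd dX f2) 0 0
  - 2 * (pd dX (pd dX f3) 0 0 * f3 0 0 + pd dX f3 0 0 * pd dX f3 0 0).
Proof.
  intros Hd H1 H2 H3.
  assert (Z : Rabs 0 < del) by (rewrite Rabs_R0; exact Hd).
  change (pd dX (pd dX (fun u w => f1 u w * f2 u w - f3 u w * f3 u w)) 0 0) with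
    (Derive (fun t => pd dX (fun u w => f1 u w * f2 u w - f3 u w * f3 u w) t 0) 0).
  rewrite (Derive_ext_loc _ (fun t => pd dX f1 t 0 * f2 t 0 + f1 t 0 * pd dX f2 t 0
            - (pd dX f3 t 0 * f3 t 0 + f3 t 0 * pd dX f3 t 0))).
  2:{ apply loc_of with del; [exact Hd|]. intros t Ht. rewrite Rminus_0_r in Ht.
      apply pd_F; eapply exd_expd_x; [apply H1| apply H2| apply H3]; assumption. }
  pose proof (H1 0 0 Z Z) as E1. pose proof (H2 0 0 Z Z) as E2. pose proof (H3 0 0 Z Z) as E3.
  assert (a1 : ex_derive (fun t => pd dX f1 t 0) 0) by (apply (exd_dx 0%nat); apply exd_proj_x; exact E1).
  assert (a2 : ex_derive (fun t => pd dX f2 t 0) 0) by (apply (exd_dx 0%nat); apply exd_proj_x; exact E2).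
  assert (a3 : ex_derive (fun t => pd dX f3 t 0) 0) by (apply (exd_dx 0%nat); apply exd_proj_x; exact E3).
  assert (b1 : ex_derive (fun t => f1 t 0) 0) by (apply (exd_dx 1%nat); exact E1).
  assert (b2 : ex_derive (fun t => f2 t 0) 0) by (apply (exd_dx 1%nat); exact E2).
  assert (b3 : ex_derive (fun t => f3 t 0) 0) by (apply (exd_dx 1%nat); exact E3).
  rewrite (DR_minus (fun t => pd dX f1 t 0 * f2 t 0 + f1 t 0 * pd dX f2 t 0)
                    (fun t => pd dX f3 t 0 * f3 t 0 + f3 t 0 * pd dX f3 t 0)).
  2:{ apply exR_plus; apply exR_mult; assumption. }
  2:{ apply exR_plus; apply exR_mult; assumption. }
  rewrite (DR_plus (fun t => pd dX f1 t 0 * f2 t 0) (fun t => f1 t 0 * pd dX f2 t 0)) by (apply exR_mult; assumption).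
  rewrite (DR_plus (fun t => pd dX f3 t 0 * f3 t 0) (fun t => f3 t 0 * pd dX f3 t 0)) by (apply exR_mult; assumption).
  rewrite !DR_mult by assumption.
  simpl. ring.
Qed.

Lemma gauss_zero h x y : gaussK h x y = 0 <-> hxx h x y * hyy h x y - hxy h x y * hxy h x y = 0.
Proof.
  unfold gaussK, se, sf, sg, fE, fF, fG, Wn.
  set (X := hx h x y). set (Y := hy h x y).
  set (N := hxx h x y * hyy h x y - hxy h x y * hxy h x y).
  assert (HW : 0 < sqrt (1 + X ^ 2 + Y ^ 2)) by (apply sqrt_lt_R0; nra).
  assert (HW2 : sqrt (1 + X ^ 2 + Y ^ 2) * sqrt (1 + X ^ 2 + Y ^ 2) = 1 + X ^ 2 + Y ^ 2) by (apply sqrt_sqrt; nra).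
  assert (HD : (1 + X ^ 2) * (1 + Y ^ 2) - (X * Y) ^ 2 = 1 + X ^ 2 + Y ^ 2) by ring.
  rewrite HD.
  set (s := sqrt (1 + X ^ 2 + Y ^ 2)) in *. set (Q := 1 + X ^ 2 + Y ^ 2) in *.
  assert (HQ : 0 < Q) by (unfold Q; nra).
  replace ((hxx h x y / s * (hyy h x y / s) - (hxy h x y / s) ^ 2) / Q) with (N / (s * s) / Q)
    by (unfold N; field; split; lra).
  rewrite HW2. split; intro H.
  - replace N with (N / Q / Q * Q * Q) by (field; lra). rewrite H. ring.
  - rewrite H. unfold Rdiv. ring.
Qed.

Lemma der_quot (g : R -> R) l : derivable_pt_lim g 0 l -> g 0 = 0 -> is_lim (fun t => g t / t) 0 l.
Proof.
  intros H H0. apply is_lim_spec. intros eps.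
  destruct (H eps (cond_pos eps)) as [dl Hdl].
  exists dl. intros y Hy Hne. 
  assert (Hy' : Rabs y < dl).
  { unfold ball in Hy; simpl in Hy; unfold AbsRing_ball, abs, minus, plus, opp in Hy; simpl in Hy.
    rewrite Ropp_0, Rplus_0_r in Hy. exact Hy. }
  specialize (Hdl y Hne Hy'). rewrite Rplus_0_l, H0, Rminus_0_r in Hdl. exact Hdl.
Qed.

Lemma comp_quot (f : R -> R -> R) (p q : R -> R) fx fy l1 l2 :
  differentiable_pt_lim f 0 0 fx fy -> p 0 = 0 -> q 0 = 0 -> f 0 0 = 0 ->
  is_derive p 0 l1 -> is_derive q 0 l2 -> is_lim (fun t => f (p t) (q t) / t) 0 (fx * l1 + fy * l2).
Proof.
  intros Hf Hp Hq H0 D1 D2. apply der_quot.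
  - apply (derivable_pt_lim_comp_2d f p q 0); [rewrite Hp, Hq; exact Hf| apply is_derive_Reals; exact D1| apply is_derive_Reals; exact D2].
  - rewrite Hp, Hq. exact H0.
Qed.

Lemma lim_cont2 (f : R -> R -> R) (p q : R -> R) :
  continuity_2d_pt f 0 0 -> p 0 = 0 -> q 0 = 0 -> continuity_pt p 0 -> continuity_pt q 0 ->
  is_lim (fun t => f (p t) (q t)) 0 (f 0 0).
Proof.
  intros Hf Hp Hq Cp Cq.
  replace (f 0 0) with (f (p 0) (q 0)) by (rewrite Hp, Hq; reflexivity).
  apply (is_lim_continuity (fun t => f (p t) (q t)) 0). apply cont_comp_curve; [rewrite Hp, Hq; exact Hf| exact Cp| exact Cq].
Qed.

Lemma cont2d_comp (g : R -> R) (f : R -> R -> R) x y :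
  continuity_pt g (f x y) -> continuity_2d_pt f x y -> continuity_2d_pt (fun u v => g (f u v)) x y.
Proof.
  intros Hg Hf eps. destruct (Hg eps (cond_pos eps)) as [a [Ha Ha']].
  destruct (Hf (mkposreal a Ha)) as [e He]. exists e. intros u v Hu Hv.
  specialize (He u v Hu Hv). cbn [pos] in He.
  destruct (Req_dec (f u v) (f x y)) as [E|NE].
  - rewrite E, Rminus_diag_eq, Rabs_R0 by reflexivity. apply cond_pos.
  - apply (Ha' (f u v)). split; [split; [exact I| auto]|]. exact He.
Qed.

Lemma cont2d_sq (f : R -> R -> R) x y : continuity_2d_pt f x y -> continuity_2d_pt (fun u v => f u v ^ 2) x y.
Proof.
  intro H. apply continuity_2d_pt_ext_loc with (fun u v => f u v * f u v).
  - apply locally_2d_forall. intros; ring.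
  - apply continuity_2d_pt_mult; exact H.
Qed.

Lemma cont2d_div (f g : R -> R -> R) x y : continuity_2d_pt f x y -> continuity_2d_pt g x y -> g x y <> 0 ->
  continuity_2d_pt (fun u v => f u v / g u v) x y.
Proof.
  intros Hf Hg H. unfold Rdiv. apply continuity_2d_pt_mult; [exact Hf|].
  apply continuity_2d_pt_inv; assumption.
Qed.

Lemma isl_mult (f g : R -> R) (a b : R) : is_lim f 0 a -> is_lim g 0 b -> is_lim (fun t => f t * g t) 0 (a * b).
Proof. intros H1 H2. exact (is_lim_mult f g 0 a b H1 H2 I). Qed.
Lemma isl_plus (f g : R -> R) (a b : R) : is_lim f 0 a -> is_lim g 0 b -> is_lim (fun t => f t + g t) 0 (a + b).
Proof. intros H1 H2. apply (is_lim_plus f g 0 a b); [exact H1|exact H2|reflexivity]. Qed.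
Lemma isl_minus (f g : R -> R) (a b : R) : is_lim f 0 a -> is_lim g 0 b -> is_lim (fun t => f t - g t) 0 (a - b).
Proof. intros H1 H2. apply (is_lim_minus f g 0 a b); [exact H1|exact H2|reflexivity]. Qed.

Lemma Wn_pos h x y : 0 < Wn h x y.
Proof. unfold Wn. apply sqrt_lt_R0. nra. Qed.
Lemma den_pos h x y : 0 < fE h x y * fG h x y - fF h x y ^ 2.
Proof. unfold fE, fG, fF. nra. Qed.

Ltac c2d := repeat first [ assumption | apply continuity_2d_pt_plus | apply continuity_2d_pt_minus
  | apply continuity_2d_pt_mult | apply continuity_2d_pt_opp | apply cont2d_sq
  | apply continuity_2d_pt_const | assumption ].

Lemma cont_basic h x y :
  continuity_2d_pt (hx h) x y -> continuity_2d_pt (hy h) x y -> continuity_2d_pt (hxx h) x y ->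
  continuity_2d_pt (hxy h) x y -> continuity_2d_pt (hyy h) x y ->
  continuity_2d_pt (Wn h) x y /\ continuity_2d_pt (se h) x y /\ continuity_2d_pt (sf h) x y /\
  continuity_2d_pt (sg h) x y /\ continuity_2d_pt (fE h) x y /\ continuity_2d_pt (fF h) x y /\
  continuity_2d_pt (fG h) x y /\ continuity_2d_pt (meanH h) x y /\ continuity_2d_pt (gaussK h) x y.
Proof.
  intros C1 C2 C3 C4 C5.
  assert (CW : continuity_2d_pt (Wn h) x y).
  { unfold Wn. apply (cont2d_comp sqrt (fun u v => 1 + hx h u v ^ 2 + hy h u v ^ 2)).
    - apply continuity_pt_sqrt. nra.
    - c2d. }
  assert (Cse : continuity_2d_pt (se h) x y).
  { unfold se. apply cont2d_div; [exact C3|exact CW| pose proof (Wn_pos h x y); lra]. }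
  assert (Csf : continuity_2d_pt (sf h) x y).
  { unfold sf. apply cont2d_div; [exact C4|exact CW| pose proof (Wn_pos h x y); lra]. }
  assert (Csg : continuity_2d_pt (sg h) x y).
  { unfold sg. apply cont2d_div; [exact C5|exact CW| pose proof (Wn_pos h x y); lra]. }
  assert (CE : continuity_2d_pt (fE h) x y) by (unfold fE; c2d).
  assert (CF : continuity_2d_pt (fF h) x y) by (unfold fF; c2d).
  assert (CG : continuity_2d_pt (fG h) x y) by (unfold fG; c2d).
  repeat split; try assumption.
  - unfold meanH. apply cont2d_div; [c2d| c2d| pose proof (den_pos h x y); lra].
  - unfold gaussK. apply cont2d_div; [c2d| c2d| pose proof (den_pos h x y); lra].
Qed.

Lemma kmin_cont0 h k : 0 < k ->
  continuity_2d_pt (hx h) 0 0 -> continuity_2d_pt (hy h) 0 0 -> continuity_2d_pt (hxx h) 0 0 ->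
  continuity_2d_pt (hxy h) 0 0 -> continuity_2d_pt (hyy h) 0 0 ->
  hx h 0 0 = 0 -> hy h 0 0 = 0 -> hxx h 0 0 = 0 -> hxy h 0 0 = 0 -> hyy h 0 0 = k ->
  continuity_2d_pt (kmin h) 0 0 /\ kmin h 0 0 = 0 /\ Wn h 0 0 = 1 /\ sg h 0 0 = k /\ fG h 0 0 = 1.
Proof.
  intros Hk C1 C2 C3 C4 C5 V1 V2 V3 V4 V5.
  destruct (cont_basic h 0 0 C1 C2 C3 C4 C5) as [CW [Cse [Csf [Csg [CE [CF [CG [CH CK]]]]]]]].
  assert (W1 : Wn h 0 0 = 1) by (unfold Wn; rewrite V1, V2; replace (1 + 0 ^ 2 + 0 ^ 2) with 1 by ring; apply sqrt_1).
  assert (H0 : meanH h 0 0 = k / 2).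
  { unfold meanH, se, sf, sg, fE, fF, fG. rewrite W1, V1, V2, V3, V4, V5. field. }
  assert (K0 : gaussK h 0 0 = 0).
  { unfold gaussK, se, sf, sg, fE, fF, fG. rewrite W1, V1, V2, V3, V4, V5. field. }
  assert (S0 : sqrt (meanH h 0 0 ^ 2 - gaussK h 0 0) = k / 2).
  { rewrite H0, K0. replace ((k / 2) ^ 2 - 0) with ((k / 2) ^ 2) by ring. apply sqrt_pow2. lra. }
  split; [|split; [|split; [exact W1|split]]].
  - unfold kmin. apply continuity_2d_pt_minus; [exact CH|].
    apply (cont2d_comp sqrt (fun u v => meanH h u v ^ 2 - gaussK h u v)).
    + apply continuity_pt_sqrt. rewrite H0, K0. nra.
    + c2d.
  - unfold kmin. rewrite S0, H0. ring.
  - unfold sg. rewrite W1, V5. field.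
  - unfold fG. rewrite V2. ring.
Qed.

Lemma beta_lemma h del k d : 0 < del -> 0 < k -> Dn 4 del h ->
  hx h 0 0 = 0 -> hy h 0 0 = 0 -> hxx h 0 0 = 0 -> hxy h 0 0 = 0 -> hyy h 0 0 = k ->
  pd dX (hxy h) 0 0 = d ->
  forall eta beta, 0 < eta -> min_curvature_line h eta beta -> beta 0 = (0, 0) ->
  Derive (crvy beta) 0 = 0 -> graph_second_deriv beta = - d / k.
Proof.
  intros Hdel Hk HD V1 V2 V3 V4 V5 Vd eta beta Heta [[C2x [C2y Hreg]] Hpr] Hb0 Hb2.
  assert (Z0 : Rabs 0 < del) by (rewrite Rabs_R0; exact Hdel).
  pose proof (HD 0 0 Z0 Z0) as Z.
  assert (C1 : continuity_2d_pt (hx h) 0 0) by exact (exd_cont 3%nat _ _ _ (exd_proj_x 3%nat h 0 0 Z)).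
  assert (C2 : continuity_2d_pt (hy h) 0 0) by exact (exd_cont 3%nat _ _ _ (exd_proj_y 3%nat h 0 0 Z)).
  assert (C3 : continuity_2d_pt (hxx h) 0 0) by exact (exd_cont 2%nat _ _ _ (exd_proj_x 2%nat _ 0 0 (exd_proj_x 3%nat h 0 0 Z))).
  assert (C4 : continuity_2d_pt (hxy h) 0 0) by exact (exd_cont 2%nat _ _ _ (exd_proj_x 2%nat _ 0 0 (exd_proj_y 3%nat h 0 0 Z))).
  assert (C5 : continuity_2d_pt (hyy h) 0 0) by exact (exd_cont 2%nat _ _ _ (exd_proj_y 2%nat _ 0 0 (exd_proj_y 3%nat h 0 0 Z))).
  assert (D2xy : Dn 2 del (hxy h)) by exact (Dn_pdx 2 del _ (Dn_pdy 3 del h HD)).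
  assert (D2y : Dn 2 del (hy h)) by exact (Dn_le 3 2 del _ ltac:(lia) (Dn_pdy 3 del h HD)).
  pose proof (diff_of_exd2 _ _ _ (Dn_loc 2 del _ 0 0 D2xy Z0 Z0)) as Dfxy.
  pose proof (diff_of_exd2 _ _ _ (Dn_loc 2 del _ 0 0 D2y Z0 Z0)) as Dfy.
  destruct (kmin_cont0 h k Hk C1 C2 C3 C4 C5 V1 V2 V3 V4 V5) as [Ck [K0 [W1 [G0 F0]]]].
  destruct (cont_basic h 0 0 C1 C2 C3 C4 C5) as [CW [Cse [Csf [Csg [CE [CF [CG [CH CK]]]]]]]].
  set (b1 := crvx beta). set (b2 := crvy beta).
  assert (B1 : b1 0 = 0) by (unfold b1, crvx; rewrite Hb0; reflexivity).
  assert (B2 : b2 0 = 0) by (unfold b2, crvy; rewrite Hb0; reflexivity).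
  assert (E0 : Rabs 0 < eta) by (rewrite Rabs_R0; exact Heta).
  destruct (C2x 0 E0) as [ex1 [exd1 [c1 c1']]].
  destruct (C2y 0 E0) as [ex2 [exd2 [c2 c2']]].
  fold b1 in ex1, exd1, c1, c1'. fold b2 in ex2, exd2, c2, c2'.
  set (l1 := Derive b1 0).
  assert (Hl1 : l1 <> 0).
  { destruct (Hreg 0 E0) as [H|H]; [exact H| exfalso; apply H; exact Hb2]. }
  assert (Cb1 : continuity_pt b1 0) by (apply cont_of_ex_derive; exact ex1).
  assert (Cb2 : continuity_pt b2 0) by (apply cont_of_ex_derive; exact ex2).
  pose proof (comp_quot (hxy h) b1 b2 _ _ _ _ Dfxy B1 B2 V4 (Derive_correct _ _ ex1) (Derive_correct _ _ ex2)) as Lq.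
  pose proof (comp_quot (hy h) b1 b2 _ _ _ _ Dfy B1 B2 V2 (Derive_correct _ _ ex1) (Derive_correct _ _ ex2)) as Ly.
  fold l1 in Lq, Ly. fold b2 in Hb2. rewrite Hb2, Vd in Lq. rewrite Hb2 in Ly.
  pose proof (lim_cont2 (fun u v => / Wn h u v) b1 b2 ltac:(apply continuity_2d_pt_inv; [exact CW| lra]) B1 B2 Cb1 Cb2) as LW.
  cbv beta in LW. rewrite W1, Rinv_1 in LW.
  pose proof (lim_cont2 (kmin h) b1 b2 Ck B1 B2 Cb1 Cb2) as Lk. rewrite K0 in Lk.
  pose proof (lim_cont2 (hx h) b1 b2 C1 B1 B2 Cb1 Cb2) as Lx. rewrite V1 in Lx.
  pose proof (lim_cont2 (sg h) b1 b2 Csg B1 B2 Cb1 Cb2) as Lsg. rewrite G0 in Lsg.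
  pose proof (lim_cont2 (fG h) b1 b2 CG B1 B2 Cb1 Cb2) as LfG. rewrite F0 in LfG.
  assert (Ld1 : is_lim (Derive b1) 0 l1).
  { apply is_lim_continuity. apply continuity_pt_filterlim. exact c1. }
  assert (Ld2 : is_lim (fun t => Derive b2 t / t) 0 (Derive_n b2 2 0)).
  { apply der_quot; [|exact Hb2]. apply is_derive_Reals. apply (Derive_correct (Derive b2) 0 exd2). }
  set (Phi := fun t => ((hxy h (b1 t) (b2 t) / t) * (/ Wn h (b1 t) (b2 t))
                 - kmin h (b1 t) (b2 t) * (hx h (b1 t) (b2 t) * (hy h (b1 t) (b2 t) / t))) * Derive b1 t
               + (sg h (b1 t) (b2 t) - kmin h (b1 t) (b2 t) * fG h (b1 t) (b2 t)) * (Derive b2 t / t)).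
  set (Lyv := pd dX (hy h) 0 0 * l1 + pd dY (hy h) 0 0 * 0) in Ly.
  assert (LP : is_lim Phi 0 (((d * l1 + pd dY (hxy h) 0 0 * 0) * 1 - 0 * (0 * Lyv)) * l1 + (k - 0 * 1) * Derive_n b2 2 0)).
  { unfold Phi. apply isl_plus; apply isl_mult.
    - apply isl_minus; apply isl_mult; try assumption. apply isl_mult; assumption.
    - exact Ld1.
    - apply isl_minus; [exact Lsg|]. apply isl_mult; assumption.
    - exact Ld2. }
  assert (LP0 : is_lim Phi 0 0).
  { apply (is_lim_ext_loc (fun _ => 0)); [|apply is_lim_const].
    exists (mkposreal eta Heta). intros t Ht Hne.
    assert (Ht' : Rabs t < eta).
    { unfold ball in Ht; simpl in Ht; unfold AbsRing_ball, abs, minus, plus, opp in Ht; simpl in Ht.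
      rewrite Ropp_0, Rplus_0_r in Ht. exact Ht. }
    destruct (Hpr t Ht') as [_ [_ Eq2]]. fold b1 b2 in Eq2.
    pose proof (Wn_pos h (b1 t) (b2 t)) as HW.
    assert (Phi t * t = 0).
    { rewrite <- Eq2. unfold Phi, sf, fF, hx, hy. field. split; [lra| exact Hne]. }
    apply Rmult_integral in H. destruct H as [H|H]; [symmetry; exact H| contradiction]. }
  set (D2 := Derive_n b2 2 0) in *.
  assert (U3 : Finite (((d * l1 + pd dY (hxy h) 0 0 * 0) * 1 - 0 * (0 * Lyv)) * l1 + (k - 0 * 1) * D2) = Finite 0).
  { rewrite <- (is_lim_unique _ _ _ LP). exact (is_lim_unique _ _ _ LP0). }
  apply Rbar_finite_eq in U3.
  assert (U4 : k * D2 = - (d * l1 ^ 2)) by (ring_simplify in U3; ring_simplify; lra).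
  unfold graph_second_deriv. fold b1 b2 l1 D2.
  replace D2 with (- d / k * l1 ^ 2).
  2:{ apply (Rmult_eq_reg_l k); [|lra]. rewrite U4. field. lra. }
  field. split; [lra| exact Hl1].
Qed.

Lemma C2_id e : C2_on e (fun t => t).
Proof.
  intros t _.
  assert (E1 : forall x, Derive (fun t => t) x = 1) by (intro; apply Derive_id).
  assert (E2 : forall x, Derive (Derive (fun t => t)) x = 0).
  { intro x. rewrite (Derive_ext _ (fun _ => 1) x E1). apply Derive_const. }
  split; [apply ex_derive_id|].
  split; [apply ex_derive_ext with (fun _ => 1); [intro; symmetry; apply E1| apply ex_derive_const]|].
  split.
  - apply (continuous_ext_loc _ (fun _ => 1)); [apply filter_forall; intro; symmetry; apply E1| apply continuous_const].
  - apply (continuous_ext_loc _ (fun _ => 0)); [apply filter_forall; intro; symmetry; apply E2| apply continuous_const].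
Qed.

Lemma disk_abs del x y : 0 < del -> disk del x y -> Rabs x < del /\ Rabs y < del.
Proof.
  intros Hd H. unfold disk in H.
  pose proof (pow2_abs x). pose proof (pow2_abs y). pose proof (Rabs_pos x). pose proof (Rabs_pos y).
  split; nra.
Qed.

Theorem lemma3 (r : nat) (h : R -> R -> R) (rho : R)
  (k a b c d A B C D E : R) :
  (6 <= r)%nat ->
  0 < rho ->
  Cr_on r (disk rho) h ->
  (* h = P + O(5) at 0 *)
  (exists M delta, 0 < delta /\ forall x y, disk delta x y ->
     Rabs (h x y - mongeP k a b c d A B C D E x y)
       <= M * (sqrt (x ^ 2 + y ^ 2)) ^ 5) ->
  0 < k ->
  a ^ 2 + d ^ 2 <> 0 ->
  exists (eps : R) (gam : R -> R * R),
    0 < eps /\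
    regular_C2_curve eps gam /\
    gam 0 = (0, 0) /\
    (forall s t, Rabs s < eps -> Rabs t < eps -> gam s = gam t -> s = t) /\
    (* near 0 the parabolic set is exactly the curve gam *)
    (exists delta, 0 < delta /\ forall x y, disk delta x y ->
       (gaussK h x y = 0 <-> exists t, Rabs t < eps /\ gam t = (x, y))) /\
    (* normal to (a,d) at 0 *)
    a * Derive (crvx gam) 0 + d * Derive (crvy gam) 0 = 0 /\
    (* a <> 0: transversal to (1,0) *)
    (a <> 0 -> Derive (crvy gam) 0 <> 0) /\
    (* a = 0: tangent to (1,0), and quadratic contact with the
       minimal principal curvature line through 0 tangent to (1,0) *)
    (a = 0 ->
       Derive (crvy gam) 0 = 0 /\
       (d * k * (A * k - 3 * d ^ 2) <> 0 ->
        forall (eta : R) (beta : R -> R * R),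
          0 < eta ->
          min_curvature_line h eta beta ->
          beta 0 = (0, 0) ->
          Derive (crvy beta) 0 = 0 ->
          graph_second_deriv gam <> graph_second_deriv beta)).
Proof.
  intros Hr Hrho Hcr [M [dm [Hdm HP]]] Hk Had.
  set (del0 := rho / 2).
  assert (Hdel0 : 0 < del0) by (unfold del0; lra).
  assert (HDw : forall w m, (length w + m <= r)%nat -> Dn m del0 (pds w h)).
  { intros w m Hl. exact (Dn_word r rho h w m Hcr Hrho Hl). }
  assert (Z0 : Rabs 0 < del0) by (rewrite Rabs_R0; exact Hdel0).
  destruct (derivs0 h del0 M dm k a b c d A B C D E Hdel0 (HDw nil 5%nat ltac:(simpl; lia)) Hdm HP)
    as [P00 [P10 [P01 [P20 [P11 [P02 [P30 [P21 P40]]]]]]]].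
  assert (V1 : hx h 0 0 = 0) by exact P10.
  assert (V2 : hy h 0 0 = 0) by exact P01.
  assert (V3 : hxx h 0 0 = 0) by exact P20.
  assert (V4 : hxy h 0 0 = 0) by exact P11.
  assert (V5 : hyy h 0 0 = k) by exact P02.
  assert (Va : pd dX (hxx h) 0 0 = a) by exact P30.
  assert (Vd : pd dX (hxy h) 0 0 = d) by exact P21.
  assert (VA : pd dX (pd dX (hxx h)) 0 0 = A) by exact P40.
  assert (Vyd : pd dY (hxx h) 0 0 = d).
  { change (Derive (fun v => hxx h 0 v) 0 = d).
    rewrite (Derive_ext (fun v => hxx h 0 v) (fun v => partial_derive 2 0 h 0 v)) by reflexivity.
    rewrite Derive_partial_derive; [exact P21|].
    apply (Dn_loc 3 del0 h 0 0 (HDw nil 3%nat ltac:(simpl; lia)) Z0 Z0). }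
  set (F := fun u w => hxx h u w * hyy h u w - hxy h u w * hxy h u w).
  assert (Dxx : forall m, (m <= 4)%nat -> Dn m del0 (hxx h)) by (intros m Hm; apply HDw; simpl; lia).
  assert (Dyy : forall m, (m <= 4)%nat -> Dn m del0 (hyy h)) by (intros m Hm; apply HDw; simpl; lia).
  assert (Dxy : forall m, (m <= 4)%nat -> Dn m del0 (hxy h)) by (intros m Hm; apply HDw; simpl; lia).
  assert (HF : Dn 3 del0 F).
  { unfold F. apply Dn_minus; apply Dn_mult; auto. }
  assert (F00 : F 0 0 = 0) by (unfold F; rewrite V3, V4, V5; ring).
  assert (ex : forall f v, Dn 1 del0 f -> ex_pd v f 0 0).
  { intros f v Hf. destruct v; [apply (exd_expd_x 0%nat)| apply (exd_expd_y 0%nat)]; apply Hf; exact Z0. }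
  assert (FX : pd dX F 0 0 = a * k).
  { unfold F. rewrite pd_F by (apply ex; auto). rewrite Va, V3, V4, V5. ring. }
  assert (FY : pd dY F 0 0 = d * k).
  { unfold F. rewrite pd_F by (apply ex; auto). rewrite Vyd, V3, V4, V5. ring. }
  assert (FXX : a = 0 -> pd dX (pd dX F) 0 0 = A * k - 2 * d ^ 2).
  { intro Ha. unfold F. rewrite (D2_F _ _ _ del0 Hdel0) by auto.
    rewrite VA, Va, Vd, V3, V4, V5, Ha. ring. }
  destruct (Req_dec d 0) as [Hd0|Hd0].
  - (* d = 0, so a <> 0: solve x = phi(y) *)
    assert (Ha : a <> 0) by (intro Ha; apply Had; rewrite Ha, Hd0; ring).
    set (G := fun s t => F t s).
    assert (HG : Dn 3 del0 G) by (apply Dn_swap; exact HF).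
    assert (G00 : G 0 0 = 0) by exact F00.
    assert (GY : pd dY G 0 0 = a * k) by exact FX.
    assert (GX : pd dX G 0 0 = d * k) by exact FY.
    destruct (ift G del0 Hdel0 HG G00 ltac:(rewrite GY; apply Rmult_integral_contrapositive; split; lra))
      as [e1 [bb [phi [He1 [He1d [Hb [Hbd [Hphi0 [Hphi [Huniq [HC2 [Hder Hder2]]]]]]]]]]]].
    exists e1, (fun t => (phi t, t)).
    split; [exact He1|].
    split.
    { split; [exact HC2|]. split; [exact (C2_id e1)|].
      intros t _. right. unfold crvy; simpl. replace (Derive (fun t => t) t) with 1 by (symmetry; apply (Derive_id t)). lra. }
    split; [rewrite Hphi0; reflexivity|].
    split; [intros s t _ _ Est; injection Est; auto|].
    split.
    { exists (Rmin e1 bb). split; [apply Rmin_glb_lt; assumption|].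
      intros x y Hxy. destruct (disk_abs (Rmin e1 bb) x y ltac:(apply Rmin_glb_lt; assumption) Hxy) as [Hx Hy].
      pose proof (Rmin_l e1 bb). pose proof (Rmin_r e1 bb).
      rewrite gauss_zero. fold (F x y). split.
      - intro Hz. exists y. split; [lra|]. f_equal. symmetry. apply Huniq; [lra|lra|exact Hz].
      - intros [t [Ht Et]]. injection Et as E1 E2. subst. destruct (Hphi y Ht) as [_ Hz]. exact Hz. }
    split.
    { unfold crvx, crvy; simpl. change (Derive (fun t => phi t) 0) with (Derive phi 0).
      rewrite Hder, GX, GY, Hd0. field. split; lra. }
    split.
    { intros _. unfold crvy; simpl. replace (Derive (fun t => t) 0) with 1 by (symmetry; apply (Derive_id 0)). lra. }
    intro Ha0. contradiction.
  - (* d <> 0: solve y = phi(x) *)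
    destruct (ift F del0 Hdel0 HF F00 ltac:(rewrite FY; apply Rmult_integral_contrapositive; split; lra))
      as [e1 [bb [phi [He1 [He1d [Hb [Hbd [Hphi0 [Hphi [Huniq [HC2 [Hder Hder2]]]]]]]]]]]].
    exists e1, (fun t => (t, phi t)).
    split; [exact He1|].
    split.
    { split; [exact (C2_id e1)|]. split; [exact HC2|].
      intros t _. left. unfold crvx; simpl. replace (Derive (fun t => t) t) with 1 by (symmetry; apply (Derive_id t)). lra. }
    split; [rewrite Hphi0; reflexivity|].
    split; [intros s t _ _ Est; injection Est; auto|].
    split.
    { exists (Rmin e1 bb). split; [apply Rmin_glb_lt; assumption|].
      intros x y Hxy. destruct (disk_abs (Rmin e1 bb) x y ltac:(apply Rmin_glb_lt; assumption) Hxy) as [Hx Hy].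
      pose proof (Rmin_l e1 bb). pose proof (Rmin_r e1 bb).
      rewrite gauss_zero. fold (F x y). split.
      - intro Hz. exists x. split; [lra|]. f_equal. symmetry. apply Huniq; [lra|lra|exact Hz].
      - intros [t [Ht Et]]. injection Et as E1 E2. subst. destruct (Hphi x Ht) as [_ Hz]. exact Hz. }
    assert (Dx1 : Derive (crvx (fun t => (t, phi t))) 0 = 1) by (unfold crvx; simpl; apply (Derive_id 0)).
    assert (Dy1 : Derive (crvy (fun t => (t, phi t))) 0 = - (a / d)).
    { unfold crvy; simpl. change (Derive (fun t => phi t) 0) with (Derive phi 0).
      rewrite Hder, FX, FY. field. split; lra. }
    split.
    { rewrite Dx1, Dy1. field. exact Hd0. }
    split.
    { intros Ha. rewrite Dy1. intro Hc. apply Ha.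
      apply (Rmult_eq_reg_r (/ d)); [|apply Rinv_neq_0_compat; exact Hd0].
      replace (a * / d) with (a / d) by reflexivity. lra. }
    intro Ha. split.
    { rewrite Dy1, Ha. field. exact Hd0. }
    intros Hq eta beta Heta Hmcl Hb0 Hb2.
    rewrite (beta_lemma h del0 k d Hdel0 Hk (HDw nil 4%nat ltac:(simpl; lia)) V1 V2 V3 V4 V5 Vd eta beta Heta Hmcl Hb0 Hb2).
    unfold graph_second_deriv. rewrite Dx1.
    change (Derive_n (crvy (fun t => (t, phi t))) 2 0) with (Derive_n phi 2 0).
    rewrite (Hder2 ltac:(rewrite FX, Ha; ring)), FY, (FXX Ha).
    intro Heq. apply Hq.
    match type of Heq with ?L = _ =>
      assert (E1 : A * k - 2 * d ^ 2 = d * k * (- L)) by (field; split; lra) end.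
    rewrite Heq in E1.
    assert (E2 : d * k * (- (- d / k)) = d ^ 2) by (field; lra).
    rewrite E2 in E1.
    replace (A * k - 3 * d ^ 2) with 0 by lra. ring.
Qed.
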